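(* Let $S$ be a closed densely defined symmetric operator in a separable Hilbert space with equal nonzero defect numbers. Then $S$ is a Phillips symmetric operator if and only if $\mathfrak N_\lambda\perp\mathfrak N_{-i}$ for every $\lambda\in\mathbb C_+$.
   Context: $\mathfrak N_\lambda=\ker(S^*-\lambda I)$ are the defect subspaces of $S$. A boundary triplet of $S^*$ is $(\mathcal H,\Gamma_-,\Gamma_+)$ with $\Gamma_\pm:\mathcal D(S^* )\to\mathcal H$ linear, $(S^*f,g)-(f,S^*g)=i[(\Gamma_+f,\Gamma_+g)-(\Gamma_-f,\Gamma_-g)]$, and $(\Gamma_-,\Gamma_+)$ surjective onto $\mathcal H\oplus\mathcal H$. For $\lambda\in\mathbb C_+$ the characteristic function $\Theta(\lambda)$ is the bounded operator in $\mathcal H$ with $\mathcal D(S)\dotplus\mathfrak N_\lambda=\{f\in\mathcal D(S^* ):\Theta(\lambda)\Gamma_+f=\Gamma_-f\}$. $S$ is a Phillips symmetric operator (PSO) if its characteristic function is constant on $\mathbb C_+$ (independent of the triplet). *)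

(* Defs.v *)
From Stdlib Require Import Reals List.
Open Scope R_scope.

Record C := mkC { Re : R; Im : R }.

Definition C0 : C := mkC 0 0.
Definition C1 : C := mkC 1 0.
Definition Ci : C := mkC 0 1.
Definition Cadd (a b : C) : C := mkC (Re a + Re b) (Im a + Im b).
Definition Copp (a : C) : C := mkC (- Re a) (- Im a).
Definition Csub (a b : C) : C := Cadd a (Copp b).
Definition Cmul (a b : C) : C :=
  mkC (Re a * Re b - Im a * Im b) (Re a * Im b + Im a * Re b).
Definition Cconj (a : C) : C := mkC (Re a) (- Im a).
Definition Cplus (l : C) : Prop := 0 < Im l.

(** * Complex pre-Hilbert and Hilbert spaces
    The inner product is linear in the first and antilinear in the second
    argument, matching the convention (S^* f, g) of the paper. *)
Record PreHilbert := {
  carrier :> Type;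
  vzero : carrier;
  vadd : carrier -> carrier -> carrier;
  vopp : carrier -> carrier;
  vscal : C -> carrier -> carrier;
  inner : carrier -> carrier -> C;
  vadd_assoc : forall x y z, vadd x (vadd y z) = vadd (vadd x y) z;
  vadd_comm : forall x y, vadd x y = vadd y x;
  vadd_0 : forall x, vadd x vzero = x;
  vadd_opp : forall x, vadd x (vopp x) = vzero;
  vscal_1 : forall x, vscal C1 x = x;
  vscal_assoc : forall a b x, vscal a (vscal b x) = vscal (Cmul a b) x;
  vscal_distr_v : forall a x y, vscal a (vadd x y) = vadd (vscal a x) (vscal a y);
  vscal_distr_c : forall a b x, vscal (Cadd a b) x = vadd (vscal a x) (vscal b x);
  inner_conj : forall x y, inner y x = Cconj (inner x y);
  inner_add_l : forall x y z, inner (vadd x y) z = Cadd (inner x z) (inner y z);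
  inner_scal_l : forall a x y, inner (vscal a x) y = Cmul a (inner x y);
  inner_pos : forall x, Im (inner x x) = 0 /\ 0 <= Re (inner x x);
  inner_def : forall x, inner x x = C0 -> x = vzero
}.

Arguments vzero {_}.
Arguments vadd {_} _ _.
Arguments vopp {_} _.
Arguments vscal {_} _ _.
Arguments inner {_} _ _.

Definition vsub {H : PreHilbert} (x y : H) : H := vadd x (vopp y).
Definition hnorm {H : PreHilbert} (x : H) : R := sqrt (Re (inner x x)).

Definition converges {H : PreHilbert} (u : nat -> H) (l : H) : Prop :=
  forall eps, 0 < eps -> exists N, forall n, (N <= n)%nat -> hnorm (vsub (u n) l) < eps.
Definition cauchy {H : PreHilbert} (u : nat -> H) : Prop :=
  forall eps, 0 < eps -> exists N, forall n m, (N <= n)%nat -> (N <= m)%nat ->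
    hnorm (vsub (u n) (u m)) < eps.

Record HilbertSpace := {
  pre :> PreHilbert;
  complete : forall u : nat -> pre, cauchy u -> exists l, converges u l
}.

Definition dense {H : PreHilbert} (A : H -> Prop) : Prop :=
  forall x eps, 0 < eps -> exists y, A y /\ hnorm (vsub x y) < eps.

Definition separable (H : HilbertSpace) : Prop :=
  exists d : nat -> H, dense (fun y => exists n, d n = y).

Definition subspace {H : PreHilbert} (D : H -> Prop) : Prop :=
  D vzero /\ (forall x y, D x -> D y -> D (vadd x y)) /\
  (forall a x, D x -> D (vscal a x)).

Definition is_operator {H : PreHilbert} (D : H -> Prop) (T : H -> H) : Prop :=
  subspace D /\
  (forall x y, D x -> D y -> T (vadd x y) = vadd (T x) (T y)) /\
  (forall a x, D x -> T (vscal a x) = vscal a (T x)).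

Definition densely_defined {H : PreHilbert} (D : H -> Prop) : Prop := dense D.

Definition symmetric_op {H : PreHilbert} (D : H -> Prop) (T : H -> H) : Prop :=
  forall f g, D f -> D g -> inner (T f) g = inner f (T g).

Definition closed_op {H : PreHilbert} (D : H -> Prop) (T : H -> H) : Prop :=
  forall (u : nat -> H) f g, (forall n, D (u n)) ->
    converges u f -> converges (fun n => T (u n)) g -> D f /\ T f = g.

Definition adj_graph {H : PreHilbert} (D : H -> Prop) (T : H -> H) (g h : H) : Prop :=
  forall f, D f -> inner (T f) g = inner f h.
Definition adj_dom {H : PreHilbert} (D : H -> Prop) (T : H -> H) (g : H) : Prop :=
  exists h, adj_graph D T g h.

Definition defect {H : PreHilbert} (D : H -> Prop) (T : H -> H) (l : C) (g : H) : Prop :=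
  adj_graph D T g (vscal l g).

(** * Dimension (cardinality of an orthonormal basis) *)
Definition lincomb {H : PreHilbert} (l : list (C * H)) : H :=
  fold_right (fun p acc => vadd (vscal (fst p) (snd p)) acc) vzero l.

Definition is_onb {H : PreHilbert} (M B : H -> Prop) : Prop :=
  (forall b, B b -> M b) /\
  (forall b, B b -> inner b b = C1) /\
  (forall b b', B b -> B b' -> b <> b' -> inner b b' = C0) /\
  (forall x, M x -> forall eps, 0 < eps ->
     exists l : list (C * H), (forall p, In p l -> B (snd p)) /\
       hnorm (vsub x (lincomb l)) < eps).

Definition same_dim {H : PreHilbert} (M1 M2 : H -> Prop) : Prop :=
  exists B1 B2, is_onb M1 B1 /\ is_onb M2 B2 /\
    exists (f : {x | B1 x} -> {y | B2 y}) (g : {y | B2 y} -> {x | B1 x}),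
      (forall x, g (f x) = x) /\ (forall y, f (g y) = y).

Definition equal_nonzero_defect {H : PreHilbert} (D : H -> Prop) (T : H -> H) : Prop :=
  same_dim (defect D T Ci) (defect D T (Copp Ci)) /\
  exists g, defect D T Ci g /\ g <> vzero.

Definition is_boundary_triplet {H : PreHilbert} (D : H -> Prop) (T : H -> H)
    (K : HilbertSpace) (Gm Gp : H -> K) : Prop :=
  (forall f g, adj_dom D T f -> adj_dom D T g ->
     Gm (vadd f g) = vadd (Gm f) (Gm g) /\ Gp (vadd f g) = vadd (Gp f) (Gp g)) /\
  (forall a f, adj_dom D T f ->
     Gm (vscal a f) = vscal a (Gm f) /\ Gp (vscal a f) = vscal a (Gp f)) /\
  (forall f f' g g', adj_graph D T f f' -> adj_graph D T g g' ->
     Csub (inner f' g) (inner f g') =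
     Cmul Ci (Csub (inner (Gp f) (Gp g)) (inner (Gm f) (Gm g)))) /\
  (forall a b : K, exists f, adj_dom D T f /\ Gm f = a /\ Gp f = b).

Definition bounded_op {K : PreHilbert} (A : K -> K) : Prop :=
  (forall x y, A (vadd x y) = vadd (A x) (A y)) /\
  (forall a x, A (vscal a x) = vscal a (A x)) /\
  exists M, forall x, hnorm (A x) <= M * hnorm x.

Definition is_char_fun {H : PreHilbert} (D : H -> Prop) (T : H -> H)
    (K : HilbertSpace) (Gm Gp : H -> K) (Theta : C -> K -> K) : Prop :=
  forall l, Cplus l ->
    bounded_op (Theta l) /\
    forall f, (exists u v, D u /\ defect D T l v /\ f = vadd u v) <->
              (adj_dom D T f /\ Theta l (Gp f) = Gm f).

Definition is_PSO {H : PreHilbert} (D : H -> Prop) (T : H -> H) : Prop :=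
  exists (K : HilbertSpace) (Gm Gp : H -> K) (Theta : C -> K -> K),
    is_boundary_triplet D T K Gm Gp /\ is_char_fun D T K Gm Gp Theta /\
    (forall l m, Cplus l -> Cplus m -> forall x, Theta l x = Theta m x).

(* Main.v *)
Require Import Defs.
From Stdlib Require Import Reals List.
From Stdlib Require Import Lra Lia Psatz Classical ClassicalEpsilon ProofIrrelevance FunctionalExtensionality.
Require Import Defs.
Open Scope R_scope.

Lemma Ceq (a b : C) : Re a = Re b -> Im a = Im b -> a = b.
Proof. destruct a, b; simpl; intros; subst; reflexivity. Qed.

Ltac Cext := apply Ceq; simpl; try ring.

Definition Cr (r : R) : C := mkC r 0.

Section VB.
Context {H : PreHilbert}.

Lemma vadd_0l (x : H) : vadd vzero x = x.
Proof. rewrite vadd_comm; apply vadd_0. Qed.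

Lemma idem_zero (y : H) : vadd y y = y -> y = vzero.
Proof.
  intro E. rewrite <- (vadd_opp H y). rewrite <- E at 2.
  rewrite <- vadd_assoc, vadd_opp, vadd_0. reflexivity.
Qed.

Lemma vscal_C0 (x : H) : vscal C0 x = vzero.
Proof.
  apply idem_zero. rewrite <- vscal_distr_c. f_equal. Cext.
Qed.

Lemma vscal_zero (a : C) : vscal a (@vzero H) = vzero.
Proof.
  apply idem_zero. rewrite <- vscal_distr_v, vadd_0. reflexivity.
Qed.

Lemma opp_unique (x y : H) : vadd x y = vzero -> y = vopp x.
Proof.
  intro E. rewrite <- (vadd_0 _ y), <- (vadd_opp _ x), vadd_assoc.
  rewrite (vadd_comm _ y x), E, vadd_0l. reflexivity.
Qed.

Lemma vopp_scal (x : H) : vopp x = vscal (Copp C1) x.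
Proof.
  symmetry. apply opp_unique. rewrite <- (vscal_1 _ x) at 1.
  rewrite <- vscal_distr_c. replace (Cadd C1 (Copp C1)) with C0 by Cext.
  apply vscal_C0.
Qed.

Lemma inner_add_r (x y z : H) : inner x (vadd y z) = Cadd (inner x y) (inner x z).
Proof.
  rewrite (inner_conj _ (vadd y z) x), inner_add_l, (inner_conj _ y x), (inner_conj _ z x).
  Cext.
Qed.

Lemma inner_scal_r (a : C) (x y : H) : inner x (vscal a y) = Cmul (Cconj a) (inner x y).
Proof.
  rewrite (inner_conj _ (vscal a y) x), inner_scal_l, (inner_conj _ y x). Cext.
Qed.

Lemma inner_0l (y : H) : inner vzero y = C0.
Proof. rewrite <- (vscal_C0 y), inner_scal_l. Cext. Qed.
Lemma inner_0r (y : H) : inner y vzero = C0.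
Proof. rewrite <- (vscal_C0 y), inner_scal_r. Cext. Qed.

Lemma inner_self_im (x : H) : Im (inner x x) = 0.
Proof. apply inner_pos. Qed.
Lemma inner_self_re (x : H) : 0 <= Re (inner x x).
Proof. apply inner_pos. Qed.
Lemma inner_sym_re (x y : H) : Re (inner y x) = Re (inner x y).
Proof. rewrite inner_conj. reflexivity. Qed.
Lemma inner_sym_im (x y : H) : Im (inner y x) = - Im (inner x y).
Proof. rewrite inner_conj. reflexivity. Qed.

Lemma inner_self_eq (x : H) : inner x x = Cr (Re (inner x x)).
Proof. Cext. apply inner_self_im. Qed.

Lemma nsq0 (x : H) : Re (inner x x) = 0 -> x = vzero.
Proof. intro E. apply inner_def. Cext. exact E. apply inner_self_im. Qed.

End VB.

Ltac vnorm := unfold vsub in *; repeat rewrite vopp_scal in *;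
  repeat (rewrite ?inner_add_l, ?inner_add_r, ?inner_scal_l, ?inner_scal_r, ?inner_0l, ?inner_0r in *).

Section NB.
Context {H : PreHilbert}.

Lemma veq (x y : H) : (forall z, inner x z = inner y z) -> x = y.
Proof.
  intro E. set (w := vadd x (vopp y)).
  assert (w = vzero).
  { apply inner_def. unfold w at 1. rewrite inner_add_l, vopp_scal, inner_scal_l, E. Cext. }
  rewrite <- (vadd_0 _ x), <- (vadd_opp _ y), (vadd_comm _ y), vadd_assoc.
  fold w. rewrite H0, vadd_0l. reflexivity.
Qed.

Definition nsq (x : H) := Re (inner x x).

Lemma nsq_pos (x : H) : 0 <= nsq x.
Proof. apply inner_self_re. Qed.

Lemma hnorm_pos (x : H) : 0 <= hnorm x.
Proof. apply sqrt_pos. Qed.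

Lemma hnorm_sq (x : H) : hnorm x * hnorm x = nsq x.
Proof. unfold hnorm. apply sqrt_sqrt, nsq_pos. Qed.

Lemma nsq_add (x y : H) : nsq (vadd x y) = nsq x + nsq y + 2 * Re (inner x y).
Proof. unfold nsq. vnorm. simpl. rewrite (inner_sym_re x y). ring. Qed.

Lemma nsq_scal (a : C) (x : H) : nsq (vscal a x) = (Re a * Re a + Im a * Im a) * nsq x.
Proof. unfold nsq. vnorm. simpl. rewrite inner_self_im. ring. Qed.

Lemma CS (x y : H) :
  Re (inner x y) * Re (inner x y) + Im (inner x y) * Im (inner x y) <= nsq x * nsq y.
Proof.
  destruct (Req_dec (nsq y) 0) as [E|E].
  - apply nsq0 in E. subst y. unfold nsq. rewrite !inner_0r. simpl. lra.
  - assert (Hn : 0 < nsq y) by (pose proof (nsq_pos y); lra).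
    set (r := Re (inner x y)). set (i := Im (inner x y)). set (n := nsq y). assert (Hn0 : n <> 0) by (unfold n; lra).
    pose proof (nsq_pos (vadd x (vscal (Copp (mkC (r / n) (i / n))) y))) as P.
    rewrite nsq_add, nsq_scal in P. rewrite inner_scal_r in P. simpl in P. fold r i n in P.
    assert (P2 : 0 <= nsq x - (r * r + i * i) / n).
    { replace (nsq x - (r * r + i * i) / n) with
        (nsq x + (- (r / n) * - (r / n) + - (i / n) * - (i / n)) * n +
         2 * (- (r / n) * r - - - (i / n) * i)) by (field; auto). exact P. }
    assert (0 <= (nsq x - (r * r + i * i) / n) * n) by (apply Rmult_le_pos; [exact P2 | left; exact Hn]).
    replace ((nsq x - (r * r + i * i) / n) * n) with (nsq x * n - (r * r + i * i)) in H0
      by (field; auto). lra.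
Qed.

Lemma sq_le_abs (a b : R) : 0 <= b -> a * a <= b * b -> Rabs a <= b.
Proof.
  intros Hb Hab. destruct (Rle_dec (Rabs a) b); auto.
  exfalso. assert (b < Rabs a) by lra.
  assert (b * b < Rabs a * Rabs a) by (apply Rmult_le_0_lt_compat; lra).
  rewrite <- Rabs_mult, Rabs_right in H1 by (apply Rle_ge, Rle_0_sqr). lra.
Qed.

Lemma CS_re (x y : H) : Rabs (Re (inner x y)) <= hnorm x * hnorm y.
Proof.
  apply sq_le_abs. apply Rmult_le_pos; apply hnorm_pos.
  replace (hnorm x * hnorm y * (hnorm x * hnorm y)) with ((hnorm x * hnorm x) * (hnorm y * hnorm y)) by ring.
  rewrite !hnorm_sq. pose proof (CS x y). pose proof (Rle_0_sqr (Im (inner x y))). unfold Rsqr in *. lra.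
Qed.

Lemma CS_im (x y : H) : Rabs (Im (inner x y)) <= hnorm x * hnorm y.
Proof.
  apply sq_le_abs. apply Rmult_le_pos; apply hnorm_pos.
  replace (hnorm x * hnorm y * (hnorm x * hnorm y)) with ((hnorm x * hnorm x) * (hnorm y * hnorm y)) by ring.
  rewrite !hnorm_sq. pose proof (CS x y). pose proof (Rle_0_sqr (Re (inner x y))). unfold Rsqr in *. lra.
Qed.

Lemma hnorm_le_sq (x : H) (b : R) : 0 <= b -> nsq x <= b * b -> hnorm x <= b.
Proof.
  intros Hb E. pose proof (hnorm_pos x). pose proof (hnorm_sq x).
  rewrite <- (Rabs_right (hnorm x)) by lra. apply sq_le_abs; lra.
Qed.

Lemma hnorm_lt_sq (x : H) (b : R) : 0 < b -> nsq x < b * b -> hnorm x < b.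
Proof.
  intros Hb E. pose proof (hnorm_pos x). pose proof (hnorm_sq x).
  destruct (Rlt_dec (hnorm x) b); auto. exfalso.
  assert (b * b <= hnorm x * hnorm x) by (apply Rmult_le_compat; lra). lra.
Qed.

Lemma hnorm_tri (x y : H) : hnorm (vadd x y) <= hnorm x + hnorm y.
Proof.
  apply hnorm_le_sq. pose proof (hnorm_pos x); pose proof (hnorm_pos y); lra.
  rewrite nsq_add. pose proof (CS_re x y). pose proof (Rle_abs (Re (inner x y))).
  rewrite <- !hnorm_sq. nra.
Qed.

Lemma hnorm_scal (a : C) (x : H) :
  hnorm (vscal a x) = sqrt (Re a * Re a + Im a * Im a) * hnorm x.
Proof.
  unfold hnorm at 1. fold (nsq (vscal a x)). rewrite nsq_scal, sqrt_mult. reflexivity.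
  nra. apply nsq_pos.
Qed.

Lemma hnorm_scal_r (r : R) (x : H) : hnorm (vscal (Cr r) x) = Rabs r * hnorm x.
Proof.
  rewrite hnorm_scal. simpl. f_equal. replace (r * r + 0 * 0) with (r * r) by ring.
  apply sqrt_Rsqr_abs.
Qed.

Lemma hnorm_zero (x : H) : hnorm x = 0 -> x = vzero.
Proof. intro E. apply nsq0. pose proof (hnorm_sq x) as Q. rewrite E in Q. unfold nsq in Q. lra. Qed.

Lemma hnorm_vzero : hnorm (@vzero H) = 0.
Proof. unfold hnorm. rewrite inner_0l. simpl. apply sqrt_0. Qed.

Lemma vsub_sym (x y : H) : hnorm (vsub x y) = hnorm (vsub y x).
Proof.
  replace (vsub x y) with (vscal (Cr (-1)) (vsub y x)).
  rewrite hnorm_scal_r. replace (Rabs (-1)) with 1 by (rewrite Rabs_left; lra). ring.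
  apply veq; intro z; vnorm; Cext.
Qed.

Lemma vsub_tri (x y z : H) : hnorm (vsub x z) <= hnorm (vsub x y) + hnorm (vsub y z).
Proof.
  replace (vsub x z) with (vadd (vsub x y) (vsub y z)) by (apply veq; intro w; vnorm; Cext).
  apply hnorm_tri.
Qed.

Lemma re_small (x y : H) (e : R) : hnorm x <= e -> Rabs (Re (inner x y)) <= e * hnorm y.
Proof. intro. eapply Rle_trans. apply CS_re. apply Rmult_le_compat_r; auto. apply hnorm_pos. Qed.
Lemma im_small (x y : H) (e : R) : hnorm x <= e -> Rabs (Im (inner x y)) <= e * hnorm y.
Proof. intro. eapply Rle_trans. apply CS_im. apply Rmult_le_compat_r; auto. apply hnorm_pos. Qed.

Lemma C_approx (a b : C) : (forall e, 0 < e -> Rabs (Re a - Re b) <= e /\ Rabs (Im a - Im b) <= e) -> a = b.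
Proof.
  intro E. apply Ceq.
  - destruct (Req_dec (Re a) (Re b)) as [|N]; auto. exfalso.
    destruct (E (Rabs (Re a - Re b) / 2)) as [E1 _].
    { assert (Re a - Re b <> 0) by lra. pose proof (Rabs_pos_lt _ H0). lra. }
    assert (Re a - Re b <> 0) by lra. pose proof (Rabs_pos_lt _ H0). lra.
  - destruct (Req_dec (Im a) (Im b)) as [|N]; auto. exfalso.
    destruct (E (Rabs (Im a - Im b) / 2)) as [_ E1].
    { assert (Im a - Im b <> 0) by lra. pose proof (Rabs_pos_lt _ H0). lra. }
    assert (Im a - Im b <> 0) by lra. pose proof (Rabs_pos_lt _ H0). lra.
Qed.

Lemma real_approx (a : R) : (forall e, 0 < e -> a <= e) -> a <= 0.
Proof.
  intro E. destruct (Rle_dec a 0); auto. exfalso. specialize (E (a / 2)). lra.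
Qed.

Lemma conv_add (u v : nat -> H) a b : converges u a -> converges v b ->
  converges (fun n => vadd (u n) (v n)) (vadd a b).
Proof.
  intros Cu Cv e He. destruct (Cu (e/2)) as [N1 HN1]. lra. destruct (Cv (e/2)) as [N2 HN2]. lra.
  exists (max N1 N2). intros n Hn.
  replace (vsub (vadd (u n) (v n)) (vadd a b)) with (vadd (vsub (u n) a) (vsub (v n) b))
    by (apply veq; intro z; vnorm; Cext).
  eapply Rle_lt_trans. apply hnorm_tri.
  specialize (HN1 n ltac:(lia)). specialize (HN2 n ltac:(lia)). lra.
Qed.

Lemma conv_scal (u : nat -> H) a (c : C) : converges u a ->
  converges (fun n => vscal c (u n)) (vscal c a).
Proof.
  intros Cu e He. set (k := sqrt (Re c * Re c + Im c * Im c)).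
  assert (Hk : 0 <= k) by apply sqrt_pos.
  destruct (Cu (e / (k + 1))) as [N HN]. apply Rdiv_lt_0_compat; lra.
  exists N. intros n Hn.
  replace (vsub (vscal c (u n)) (vscal c a)) with (vscal c (vsub (u n) a))
    by (apply veq; intro z; vnorm; Cext).
  rewrite hnorm_scal. fold k. specialize (HN n Hn).
  pose proof (hnorm_pos (vsub (u n) a)).
  apply Rle_lt_trans with ((k + 1) * hnorm (vsub (u n) a)). nra.
  replace e with ((k + 1) * (e / (k + 1))) by (field; lra).
  apply Rmult_lt_compat_l; lra.
Qed.

Lemma conv_inner_l (u : nat -> H) a (w : H) : converges u a ->
  forall e, 0 < e -> exists N, forall n, (N <= n)%nat ->
    Rabs (Re (inner (u n) w) - Re (inner a w)) <= e /\ Rabs (Im (inner (u n) w) - Im (inner a w)) <= e.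
Proof.
  intros Cu e He. destruct (Cu (e / (hnorm w + 1))) as [N HN].
  { pose proof (hnorm_pos w). apply Rdiv_lt_0_compat; lra. }
  exists N. intros n Hn. specialize (HN n Hn).
  assert (E1 : inner (u n) w = Cadd (inner (vsub (u n) a) w) (inner a w)) by (vnorm; Cext).
  rewrite E1. simpl. replace (Re (inner (vsub (u n) a) w) + Re (inner a w) - Re (inner a w))
   with (Re (inner (vsub (u n) a) w)) by ring.
  replace (Im (inner (vsub (u n) a) w) + Im (inner a w) - Im (inner a w))
   with (Im (inner (vsub (u n) a) w)) by ring.
  pose proof (hnorm_pos w).
  assert (B : (e / (hnorm w + 1)) * hnorm w <= e).
  { apply Rle_trans with ((e / (hnorm w + 1)) * (hnorm w + 1)).
    apply Rmult_le_compat_l. apply Rlt_le, Rdiv_lt_0_compat; lra. lra.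
    right; field; lra. }
  split; eapply Rle_trans; [apply re_small; left; exact HN | exact B | apply im_small; left; exact HN | exact B].
Qed.

Lemma conv_unique_inner (u : nat -> H) a (w : H) (c : C) : converges u a ->
  (forall n, inner (u n) w = c) -> inner a w = c.
Proof.
  intros Cu E. apply C_approx. intros e He. destruct (conv_inner_l u a w Cu e He) as [N HN].
  destruct (HN N (le_n N)) as [A B]. rewrite E in A, B.
  rewrite Rabs_minus_sym in A, B. auto.
Qed.

Lemma conv_unique (u : nat -> H) a b : converges u a -> converges u b -> a = b.
Proof.
  intros Ca Cb. apply veq. intro z.
  apply C_approx. intros e He.
  destruct (conv_inner_l u a z Ca (e/2)) as [N1 H1]. lra.
  destruct (conv_inner_l u b z Cb (e/2)) as [N2 H2]. lra.
  destruct (H1 (max N1 N2) ltac:(lia)). destruct (H2 (max N1 N2) ltac:(lia)).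
  split.
  - replace (Re (inner a z) - Re (inner b z)) with
     (-(Re (inner (u (max N1 N2)) z) - Re (inner a z)) + (Re (inner (u (max N1 N2)) z) - Re (inner b z))) by ring.
    eapply Rle_trans. apply Rabs_triang. rewrite Rabs_Ropp. lra.
  - replace (Im (inner a z) - Im (inner b z)) with
     (-(Im (inner (u (max N1 N2)) z) - Im (inner a z)) + (Im (inner (u (max N1 N2)) z) - Im (inner b z))) by ring.
    eapply Rle_trans. apply Rabs_triang. rewrite Rabs_Ropp. lra.
Qed.

Lemma conv_const (a : H) : converges (fun _ => a) a.
Proof.
  intros e He. exists O. intros. replace (vsub a a) with (@vzero H) by (apply veq; intro; vnorm; Cext).
  rewrite hnorm_vzero. lra.
Qed.

End NB.

Definition closed_set {H : PreHilbert} (M : H -> Prop) :=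
  forall (u : nat -> H) l, (forall n, M (u n)) -> converges u l -> M l.

Lemma dense_orth {H : PreHilbert} (D : H -> Prop) (z : H) :
  dense D -> (forall f, D f -> inner f z = C0) -> z = vzero.
Proof.
  intros Dd Orth. apply hnorm_zero. apply Rle_antisym; [|apply hnorm_pos].
  apply real_approx. intros e He.
  destruct (Dd z e He) as [y [Dy Hy]].
  pose proof (hnorm_pos z) as Pz.
  assert (E : nsq z = Re (inner (vsub z y) z)).
  { unfold nsq. replace (inner z z) with (Cadd (inner (vsub z y) z) (inner y z)).
    rewrite (Orth y Dy). simpl. ring. vnorm. Cext. }
  pose proof (CS_re (vsub z y) z). pose proof (Rle_abs (Re (inner (vsub z y) z))).
  rewrite <- hnorm_sq in E.
  destruct (Req_dec (hnorm z) 0) as [Z|Z]. lra.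
  assert (hnorm z * hnorm z <= e * hnorm z) by nra.
  nra.
Qed.

Section Op.
Context {H : PreHilbert} (D : H -> Prop) (T : H -> H).
Context (Hop : is_operator D T) (Hdense : dense D) (Hsym : symmetric_op D T).

Lemma D0 : D vzero. Proof. apply Hop. Qed.
Lemma Dadd x y : D x -> D y -> D (vadd x y). Proof. apply Hop. Qed.
Lemma Dscal a x : D x -> D (vscal a x). Proof. apply Hop. Qed.
Lemma Dsub x y : D x -> D y -> D (vsub x y).
Proof. intros. unfold vsub. rewrite vopp_scal. apply Dadd; auto. apply Dscal; auto. Qed.
Lemma Tadd x y : D x -> D y -> T (vadd x y) = vadd (T x) (T y). Proof. apply Hop. Qed.
Lemma Tscal a x : D x -> T (vscal a x) = vscal a (T x). Proof. apply Hop. Qed.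
Lemma Tsub x y : D x -> D y -> T (vsub x y) = vsub (T x) (T y).
Proof.
  intros. unfold vsub. rewrite !vopp_scal. rewrite Tadd, Tscal; auto. apply Dscal; auto.
Qed.

Lemma adj_unique g h1 h2 : adj_graph D T g h1 -> adj_graph D T g h2 -> h1 = h2.
Proof.
  intros A1 A2.
  assert (vsub h1 h2 = vzero).
  { apply (dense_orth D); auto. intros f Df. vnorm. rewrite <- A1, <- A2 by auto. Cext. }
  apply veq. intro z. assert (inner (vsub h1 h2) z = C0) by (rewrite H0; apply inner_0l).
  vnorm. apply Ceq. apply (f_equal Re) in H1. simpl in H1. simpl. lra.
  apply (f_equal Im) in H1. simpl in H1. simpl. lra.
Qed.

Lemma adj_add g h g' h' : adj_graph D T g h -> adj_graph D T g' h' ->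
  adj_graph D T (vadd g g') (vadd h h').
Proof. intros A A' f Df. rewrite !inner_add_r, A, A'; auto. Qed.

Lemma adj_scal a g h : adj_graph D T g h -> adj_graph D T (vscal a g) (vscal a h).
Proof. intros A f Df. rewrite !inner_scal_r, A; auto. Qed.

Lemma adj_zero : adj_graph D T vzero vzero.
Proof. intros f Df. rewrite inner_0r, inner_0r. reflexivity. Qed.

Lemma adj_sub g h g' h' : adj_graph D T g h -> adj_graph D T g' h' ->
  adj_graph D T (vsub g g') (vsub h h').
Proof. intros. unfold vsub. rewrite !vopp_scal. apply adj_add; auto. apply adj_scal; auto. Qed.

Lemma adj_D u : D u -> adj_graph D T u (T u).
Proof. intros Du f Df. apply Hsym; auto. Qed.

Lemma defect_adj l g : defect D T l g -> adj_graph D T g (vscal l g).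
Proof. auto. Qed.

Lemma T_real u : D u -> Im (inner (T u) u) = 0.
Proof.
  intro Du. pose proof (Hsym u u Du Du). rewrite (inner_conj _ (T u) u) in H0.
  apply (f_equal Im) in H0. simpl in H0. lra.
Qed.

Lemma lower_bound (mu : C) u : D u ->
  Rabs (Im mu) * hnorm u <= hnorm (vsub (T u) (vscal mu u)).
Proof.
  intro Du. set (w := vsub (T u) (vscal mu u)).
  assert (E : Im (inner w u) = - Im mu * nsq u).
  { unfold w, nsq. vnorm. simpl. rewrite T_real by auto. rewrite inner_self_im. ring. }
  pose proof (CS_im w u). rewrite E in H0. rewrite <- hnorm_sq in H0.
  pose proof (hnorm_pos u). pose proof (hnorm_pos w).
  rewrite Rabs_mult, Rabs_Ropp, (Rabs_right (hnorm u * hnorm u)) in H0 by nra.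
  destruct (Req_dec (hnorm u) 0) as [Z|Z]. rewrite Z. nra.
  pose proof (Rabs_pos (Im mu)).
  apply Rmult_le_reg_r with (hnorm u). lra. nra.
Qed.

Lemma range_orth (mu : C) z : (forall u, D u -> inner (vsub (T u) (vscal mu u)) z = C0) ->
  defect D T (Cconj mu) z.
Proof.
  intros O f Df. specialize (O f Df). vnorm. apply Ceq.
  - apply (f_equal Re) in O. simpl in O |- *. lra.
  - apply (f_equal Im) in O. simpl in O |- *. lra.
Qed.

Lemma defect_orth_range (mu : C) z u : defect D T (Cconj mu) z -> D u ->
  inner (vsub (T u) (vscal mu u)) z = C0.
Proof.
  intros Dz Du. specialize (Dz u Du). vnorm. rewrite Dz. vnorm. Cext.
Qed.

End Op.

Lemma small_inv (r : R) : 0 < r -> exists N : nat, forall n, (N <= n)%nat -> / (INR n + 1) < r.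
Proof.
  intros Hr. destruct (archimed_cor1 r Hr) as [N [HN HN0]]. exists N. intros n Hn.
  apply le_INR in Hn. assert (0 < INR N) by (apply lt_0_INR; lia).
  apply Rle_lt_trans with (/ INR N); auto. apply Rinv_le_contravar; lra.
Qed.

Lemma inv_pos n : 0 < / (INR n + 1).
Proof. apply Rinv_0_lt_compat. pose proof (pos_INR n). lra. Qed.

Lemma closed_orth {H : PreHilbert} (P : H -> Prop) :
  closed_set (fun g => forall w, P w -> inner g w = C0).
Proof.
  intros u l Hu Cu w Pw. apply (conv_unique_inner u l w C0 Cu). intro n. apply Hu; auto.
Qed.

Lemma defect_char {H : PreHilbert} (D : H -> Prop) (T : H -> H) l g :
  defect D T l g <-> (forall w, (exists f, D f /\ w = vsub (T f) (vscal (Cconj l) f)) -> inner g w = C0).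
Proof.
  split.
  - intros Dg w [f [Df ->]]. specialize (Dg f Df).
    vnorm. rewrite (inner_conj _ (T f) g), Dg, (inner_conj _ f g). Cext.
  - intros O f Df. specialize (O _ (ex_intro _ f (conj Df eq_refl))).
    vnorm. rewrite (inner_conj _ (T f) g), (inner_conj _ f g) in O.
    apply Ceq; [apply (f_equal Re) in O | apply (f_equal Im) in O]; simpl in O |- *; lra.
Qed.

Lemma defect_closed {H : PreHilbert} (D : H -> Prop) (T : H -> H) l : closed_set (defect D T l).
Proof.
  intros u g Hu Cu. apply defect_char. apply (closed_orth _ u g); auto.
  intros n. apply defect_char. auto.
Qed.

Lemma defect_subspace {H : PreHilbert} (D : H -> Prop) (T : H -> H) l : subspace (defect D T l).
Proof.
  split; [|split].
  - intros f Df. rewrite vscal_zero. rewrite !inner_0r. reflexivity.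
  - intros x y Dx Dy f Df. rewrite vscal_distr_v, !inner_add_r, Dx, Dy; auto.
  - intros a x Dx f Df. rewrite vscal_assoc, !inner_scal_r, Dx by auto. rewrite inner_scal_r.
    Cext.
Qed.

Lemma sub_sub {H : PreHilbert} (M : H -> Prop) x y : subspace M -> M x -> M y -> M (vsub x y).
Proof.
  intros [M0 [Ma Ms]] Mx My. unfold vsub. rewrite vopp_scal. apply Ma; auto.
Qed.

Section Hil.
Context {H : HilbertSpace}.

Lemma conv_cauchy (u : nat -> H) l : converges u l -> cauchy u.
Proof.
  intros Cu e He. destruct (Cu (e/2)) as [N HN]. lra. exists N. intros n m Hn Hm.
  eapply Rle_lt_trans. apply (vsub_tri _ l). rewrite (vsub_sym l). pose proof (HN n Hn).
  pose proof (HN m Hm). lra.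
Qed.

Lemma range_closed (D : H -> Prop) (T : H -> H) (mu : C) :
  is_operator D T -> symmetric_op D T -> closed_op D T -> Im mu <> 0 ->
  closed_set (fun y => exists u, D u /\ y = vsub (T u) (vscal mu u)).
Proof.
  intros Hop Hsym Hcl Hmu y l Hy Cy.
  assert (Hch : forall n, {u | D u /\ y n = vsub (T u) (vscal mu u)}).
  { intro n. apply constructive_indefinite_description. apply Hy. }
  set (u := fun n => proj1_sig (Hch n)).
  assert (Du : forall n, D (u n)) by (intro n; apply (proj2_sig (Hch n))).
  assert (Eu : forall n, y n = vsub (T (u n)) (vscal mu (u n))) by (intro n; apply (proj2_sig (Hch n))).
  assert (Pm : 0 < Rabs (Im mu)) by (apply Rabs_pos_lt; auto).
  assert (Cu : cauchy u).
  { intros e He. destruct (conv_cauchy y l Cy (e * Rabs (Im mu))) as [N HN]. nra.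
    exists N. intros n m Hn Hm. specialize (HN n m Hn Hm).
    pose proof (lower_bound D T Hsym mu (vsub (u n) (u m)) (Dsub D T Hop _ _ (Du n) (Du m))).
    replace (vsub (T (vsub (u n) (u m))) (vscal mu (vsub (u n) (u m)))) with (vsub (y n) (y m)) in H0.
    apply Rmult_lt_reg_l with (Rabs (Im mu)); auto. lra.
    rewrite (Tsub D T Hop) by auto. rewrite !Eu. apply veq; intro z; vnorm; Cext. }
  destruct (complete H u Cu) as [w Cw].
  assert (CT : converges (fun n => T (u n)) (vadd l (vscal mu w))).
  { replace (fun n => T (u n)) with (fun n => vadd (y n) (vscal mu (u n))).
    apply conv_add; auto. apply conv_scal; auto.
    apply functional_extensionality. intro n. rewrite Eu. apply veq; intro z; vnorm; Cext. }
  destruct (Hcl u w _ Du Cw CT) as [Dw Tw]. exists w. split; auto. rewrite Tw.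
  apply veq; intro z; vnorm; Cext.
Qed.

Lemma parallelogram (a b : H) : nsq (vsub a b) + nsq (vadd a b) = 2 * nsq a + 2 * nsq b.
Proof.
  unfold nsq. vnorm. simpl. rewrite (inner_sym_re a b), (inner_sym_im a b), !inner_self_im. ring.
Qed.

Lemma projection (M : H -> Prop) : subspace M -> closed_set M ->
  forall x, exists m, M m /\ forall m', M m' -> inner (vsub x m) m' = C0.
Proof.
  intros SM CM x. destruct SM as [M0 [Ma Ms]].
  set (E := fun r => exists m, M m /\ r = - hnorm (vsub x m)).
  assert (Eb : bound E).
  { exists 0. intros r [m [_ ->]]. pose proof (hnorm_pos (vsub x m)). lra. }
  assert (Ene : exists r, E r) by (exists (- hnorm (vsub x vzero)); exists vzero; auto).
  destruct (completeness E Eb Ene) as [L [LU LL]].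
  set (d := - L).
  assert (Hd1 : forall m, M m -> d <= hnorm (vsub x m)).
  { intros m Mm. assert (- hnorm (vsub x m) <= L) by (apply LU; exists m; auto). unfold d; lra. }
  assert (Hd0 : 0 <= d).
  { assert (L <= 0). apply LL. intros r [m [_ ->]]. pose proof (hnorm_pos (vsub x m)). lra. unfold d; lra. }
  assert (Hd2 : forall e, 0 < e -> exists m, M m /\ hnorm (vsub x m) < d + e).
  { intros e He. apply NNPP. intro N. assert (L <= - d - e). apply LL. intros r [m [Mm ->]].
    assert (~ (M m /\ hnorm (vsub x m) < d + e)) by (intro; apply N; exists m; auto).
    destruct (Rlt_dec (hnorm (vsub x m)) (d + e)). exfalso; auto. lra. unfold d in *; lra. }
  assert (Hch : forall n, {m | M m /\ hnorm (vsub x m) < d + / (INR n + 1)}).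
  { intro n. apply constructive_indefinite_description. apply Hd2. apply inv_pos. }
  set (ms := fun n => proj1_sig (Hch n)).
  assert (Mms : forall n, M (ms n)) by (intro n; apply (proj2_sig (Hch n))).
  assert (Hms : forall n, hnorm (vsub x (ms n)) < d + / (INR n + 1)) by (intro n; apply (proj2_sig (Hch n))).
  assert (Cms : cauchy ms).
  { intros e He. destruct (small_inv (e * e / (8 * d + 4))) as [N HN].
    { apply Rdiv_lt_0_compat; nra. }
    destruct (small_inv 1 Rlt_0_1) as [N1 HN1].
    exists (max N N1). intros n k Hn Hk. rewrite vsub_sym.
    apply hnorm_lt_sq; auto.
    pose proof (parallelogram (vsub x (ms n)) (vsub x (ms k))) as P.
    replace (vsub (vsub x (ms n)) (vsub x (ms k))) with (vsub (ms k) (ms n)) in P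
      by (apply veq; intro z; vnorm; Cext).
    set (c := vscal (Cr (/2)) (vadd (ms n) (ms k))).
    assert (Mc : M c) by (apply Ms, Ma; auto).
    replace (vadd (vsub x (ms n)) (vsub x (ms k))) with (vscal (Cr 2) (vsub x c)) in P
      by (unfold c; apply veq; intro z; vnorm; Cext; field).
    unfold nsq in P at 2. rewrite inner_scal_l, inner_scal_r in P. simpl in P.
    rewrite inner_self_im in P. fold (nsq (vsub x c)) in P.
    pose proof (Hd1 c Mc).
    assert (d * d <= nsq (vsub x c)) by (rewrite <- hnorm_sq; apply Rmult_le_compat; lra).
    pose proof (Hms n). pose proof (Hms k). pose proof (Hd1 _ (Mms n)). pose proof (Hd1 _ (Mms k)).
    pose proof (HN n ltac:(lia)). pose proof (HN k ltac:(lia)).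
    pose proof (HN1 n ltac:(lia)). pose proof (HN1 k ltac:(lia)).
    pose proof (inv_pos n). pose proof (inv_pos k).
    set (a := / (INR n + 1)) in *. set (b := / (INR k + 1)) in *.
    assert (nsq (vsub x (ms n)) <= (d + a) * (d + a)).
    { rewrite <- hnorm_sq. apply Rmult_le_compat; lra. }
    assert (nsq (vsub x (ms k)) <= (d + b) * (d + b)).
    { rewrite <- hnorm_sq. apply Rmult_le_compat; lra. }
    assert (a * (8 * d + 4) < e * e).
    { apply Rmult_lt_reg_r with (/ (8 * d + 4)). apply Rinv_0_lt_compat; lra.
      replace (a * (8 * d + 4) * / (8 * d + 4)) with a by (field; lra). lra. }
    assert (b * (8 * d + 4) < e * e).
    { apply Rmult_lt_reg_r with (/ (8 * d + 4)). apply Rinv_0_lt_compat; lra.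
      replace (b * (8 * d + 4) * / (8 * d + 4)) with b by (field; lra). lra. }
    assert (a * a <= a) by nra. assert (b * b <= b) by nra. nra. }
  destruct (complete H ms Cms) as [m Cm].
  assert (Mm : M m) by (apply (CM ms); auto).
  assert (Hdm : hnorm (vsub x m) <= d).
  { assert (hnorm (vsub x m) - d <= 0); [|lra]. apply real_approx. intros e He.
    destruct (Cm (e/2)) as [N1 HN1]. lra. destruct (small_inv (e/2)) as [N2 HN2]. lra.
    pose proof (HN1 (max N1 N2) ltac:(lia)). pose proof (HN2 (max N1 N2) ltac:(lia)).
    pose proof (Hms (max N1 N2)). pose proof (vsub_tri x (ms (max N1 N2)) m). lra. }
  exists m. split; auto. intros m' Mm'.
  assert (Hge : forall w, M w -> nsq (vsub x m) <= nsq (vsub x w)).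
  { intros w Mw. rewrite <- !hnorm_sq. pose proof (Hd1 w Mw). pose proof (hnorm_pos (vsub x m)).
    apply Rmult_le_compat; lra. }
  set (n := nsq m'). pose proof (nsq_pos m') as Hn.
  set (t := / (n + 1)).
  assert (Ht : 0 < t) by (apply Rinv_0_lt_compat; fold n in Hn; lra).
  assert (Htn : t * n < 1).
  { unfold t. apply Rmult_lt_reg_l with (n + 1). fold n in Hn; lra.
    replace ((n + 1) * (/ (n + 1) * n)) with n by (field; fold n in Hn; lra). fold n in Hn; lra. }
  remember (vsub x m) as a.
  set (z := inner a m').
  specialize (Hge (vadd m (vscal (Cmul (Cr t) z) m')) ltac:(apply Ma; auto)).
  replace (vsub x (vadd m (vscal (Cmul (Cr t) z) m'))) with (vsub a (vscal (Cmul (Cr t) z) m')) in Hge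
    by (subst a; apply veq; intro w; vnorm; Cext).
  unfold nsq in Hge. vnorm.
  simpl in Hge. rewrite (inner_sym_re a m'), (inner_sym_im a m'), (inner_self_im m') in Hge.
  change (Re (inner m' m')) with n in Hge. fold z in Hge.
  set (zr := Re z) in *. set (zi := Im z) in *.
  assert (Z : zr * zr + zi * zi <= 0).
  { assert (0 <= t * (zr * zr + zi * zi) * (t * n - 2)) by lra.
    assert (t * n - 2 < 0) by lra.
    assert (0 <= zr * zr + zi * zi) by (pose proof (Rle_0_sqr zr); pose proof (Rle_0_sqr zi); unfold Rsqr in *; lra).
    clearbody zr zi t n. destruct (Rle_dec (zr * zr + zi * zi) 0) as [|NS]; auto.
    assert (0 < t * (zr * zr + zi * zi)) by (apply Rmult_lt_0_compat; lra).
    set (q := t * (zr * zr + zi * zi)) in *. clearbody q. nra. }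
  fold z. assert (zr = 0) by (clearbody zr zi; nra). assert (zi = 0) by (clearbody zr zi; nra).
  apply Ceq; simpl; auto.
Qed.

End Hil.

Section Sub.
Context {H : HilbertSpace} (M : H -> Prop) (SM : subspace M) (CM : closed_set M).

Definition Sc := {x : H | M x}.
Lemma sig_ext (a b : Sc) : proj1_sig a = proj1_sig b -> a = b.
Proof.
  destruct a as [a Ha], b as [b Hb]. simpl. intros ->. f_equal. apply proof_irrelevance.
Qed.

Definition S0 : Sc := exist _ vzero (proj1 SM).
Definition Sadd (a b : Sc) : Sc :=
  exist _ (vadd (proj1_sig a) (proj1_sig b)) (proj1 (proj2 SM) _ _ (proj2_sig a) (proj2_sig b)).
Definition Sscal (c : C) (a : Sc) : Sc :=
  exist _ (vscal c (proj1_sig a)) (proj2 (proj2 SM) c _ (proj2_sig a)).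
Lemma Mopp x : M x -> M (vopp x).
Proof. intro. rewrite vopp_scal. apply SM; auto. Qed.
Definition Sopp (a : Sc) : Sc := exist _ (vopp (proj1_sig a)) (Mopp _ (proj2_sig a)).
Definition Sinner (a b : Sc) : C := inner (proj1_sig a) (proj1_sig b).

Definition SubPH : PreHilbert.
Proof.
  refine (@Build_PreHilbert Sc S0 Sadd Sopp Sscal Sinner _ _ _ _ _ _ _ _ _ _ _ _ _);
  unfold Sadd, Sopp, Sscal, Sinner, S0.
  - intros; apply sig_ext; simpl; apply vadd_assoc.
  - intros; apply sig_ext; simpl; apply vadd_comm.
  - intros; apply sig_ext; simpl; apply vadd_0.
  - intros; apply sig_ext; simpl; apply vadd_opp.
  - intros; apply sig_ext; simpl; apply vscal_1.
  - intros; apply sig_ext; simpl; apply vscal_assoc.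
  - intros; apply sig_ext; simpl; apply vscal_distr_v.
  - intros; apply sig_ext; simpl; apply vscal_distr_c.
  - intros; simpl; apply inner_conj.
  - intros; simpl; apply inner_add_l.
  - intros; simpl; apply inner_scal_l.
  - intros; simpl; apply inner_pos.
  - intros x E; apply sig_ext; simpl; apply inner_def; auto.
Defined.

Lemma SubPH_hnorm (a b : SubPH) : hnorm (vsub a b) = hnorm (vsub (proj1_sig a) (proj1_sig b)).
Proof. reflexivity. Qed.

Definition SubH : HilbertSpace.
Proof.
  refine (@Build_HilbertSpace SubPH _).
  intros u Cu.
  assert (Cu' : cauchy (fun n => proj1_sig (u n))).
  { intros e He. destruct (Cu e He) as [N HN]. exists N. exact HN. }
  destruct (complete H _ Cu') as [l Cl].
  assert (Ml : M l) by (apply (CM (fun n => proj1_sig (u n)) l); auto; intro n; apply (proj2_sig (u n))).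
  exists (exist _ l Ml). intros e He. destruct (Cl e He) as [N HN]. exists N. exact HN.
Defined.

End Sub.

Lemma conj_mi : Cconj (Copp Ci) = Ci. Proof. Cext. Qed.
Lemma conj_i : Cconj Ci = Copp Ci. Proof. Cext. Qed.

Section VN.
Context {H : HilbertSpace} (D : H -> Prop) (T : H -> H).
Context (Hop : is_operator D T) (Hdense : dense D) (Hcl : closed_op D T) (Hsym : symmetric_op D T).

Notation Ni := (defect D T Ci).
Notation Nm := (defect D T (Copp Ci)).

Lemma range_subspace (mu : C) : subspace (fun y => exists u, D u /\ y = vsub (T u) (vscal mu u)).
Proof.
  split; [|split].
  - exists vzero. split. apply Hop. rewrite <- (vscal_C0 (@vzero H)) at 2. rewrite (Tscal D T Hop) by apply Hop.
    apply veq; intro z; vnorm; Cext.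
  - intros x y [u [Du ->]] [v [Dv ->]]. exists (vadd u v). split. apply Hop; auto.
    rewrite (Tadd D T Hop) by auto. apply veq; intro z; vnorm; Cext.
  - intros a x [u [Du ->]]. exists (vscal a u). split. apply Hop; auto.
    rewrite (Tscal D T Hop) by auto. apply veq; intro z; vnorm; Cext.
Qed.

Lemma vN_exist f : adj_dom D T f ->
  exists u a b, D u /\ Ni a /\ Nm b /\ f = vadd u (vadd a b).
Proof.
  intros [h Hh].
  set (mu := Copp Ci).
  destruct (projection _ (range_subspace mu) (range_closed D T mu Hop Hsym Hcl ltac:(simpl; lra))
     (vadd h (vscal Ci f))) as [m [[u [Du Em]] Om]].
  set (z := vsub (vadd h (vscal Ci f)) m) in *.
  assert (Nz : Ni z).
  { rewrite <- conj_mi. apply range_orth. intros v Dv. fold mu.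
    specialize (Om _ (ex_intro _ v (conj Dv eq_refl))). rewrite (inner_conj _ z), Om. Cext. }
  set (a := vscal (mkC 0 (-1/2)) z).
  assert (Na : Ni a) by (apply defect_subspace; auto).
  set (b := vsub (vsub f u) a).
  exists u, a, b. split; [auto|split; [auto|split]].
  - assert (A : adj_graph D T b (vsub (vsub h (T u)) (vscal Ci a))).
    { apply adj_sub. apply adj_sub; auto. apply adj_D; auto. apply Na. }
    assert (Eh : h = vsub (vadd (vsub (T u) (vscal mu u)) z) (vscal Ci f)).
    { unfold z. rewrite Em. apply veq; intro w; vnorm; Cext. }
    replace (vsub (vsub h (T u)) (vscal Ci a)) with (vscal (Copp Ci) b) in A. exact A.
    unfold b, a. rewrite Eh. unfold mu. apply veq; intro w; vnorm; Cext; field.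
  - unfold b. apply veq; intro w; vnorm; Cext.
Qed.

Lemma vN_unique u a b : D u -> Ni a -> Nm b -> vadd u (vadd a b) = vzero ->
  u = vzero /\ a = vzero /\ b = vzero.
Proof.
  intros Du Na Nb E.
  assert (A : adj_graph D T (vadd u (vadd a b)) (vadd (T u) (vadd (vscal Ci a) (vscal (Copp Ci) b)))).
  { apply adj_add. apply adj_D; auto. apply adj_add; auto. }
  rewrite E in A. pose proof (adj_unique D T Hdense _ _ _ A (adj_zero D T)) as E2.
  assert (Ea : a = vzero).
  { apply nsq0. assert (Q : Cadd (inner (vadd u (vadd a b)) a) (inner (vadd (T u) (vadd (vscal Ci a) (vscal (Copp Ci) b))) (vscal Ci a)) = C0).
    { rewrite E, E2, inner_0l, inner_0l. Cext. }
    vnorm. rewrite (Na u Du) in Q. vnorm.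
    apply (f_equal Re) in Q. simpl in Q. rewrite (inner_sym_re a b), (inner_sym_im a b) in Q. lra. }
  assert (Eb : b = vzero).
  { apply nsq0. assert (Q : Cadd (inner (vadd u (vadd a b)) b) (inner (vadd (T u) (vadd (vscal Ci a) (vscal (Copp Ci) b))) (vscal (Copp Ci) b)) = C0).
    { rewrite E, E2, inner_0l, inner_0l. Cext. }
    vnorm. rewrite (Nb u Du) in Q. vnorm.
    apply (f_equal Re) in Q. simpl in Q. lra. }
  subst a b. split; auto. rewrite !vadd_0 in E. auto.
Qed.

End VN.

Section Dec.
Context {H : HilbertSpace} (D : H -> Prop) (T : H -> H).
Context (Hop : is_operator D T) (Hdense : dense D) (Hcl : closed_op D T) (Hsym : symmetric_op D T).

Notation Ni := (defect D T Ci).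
Notation Nm := (defect D T (Copp Ci)).

Definition dec_prop (f : H) (p : H * (H * H)) :=
  Ni (fst (snd p)) /\ Nm (snd (snd p)) /\
  (adj_dom D T f -> D (fst p) /\ f = vadd (fst p) (vadd (fst (snd p)) (snd (snd p)))).

Lemma dec_ex f : exists p, dec_prop f p.
Proof.
  destruct (classic (adj_dom D T f)) as [A|A].
  - destruct (vN_exist D T Hop Hcl Hsym f A) as [u [a [b [Du [Na [Nb E]]]]]].
    exists (u, (a, b)). repeat split; auto.
  - exists (vzero, (vzero, vzero)). split; [|split]; simpl.
    apply defect_subspace. apply defect_subspace. intro; contradiction.
Qed.

Definition dec f := proj1_sig (constructive_indefinite_description _ (dec_ex f)).
Definition Pd f := fst (dec f).
Definition Pp f := fst (snd (dec f)).
Definition Pm f := snd (snd (dec f)).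

Lemma Pp_N f : Ni (Pp f). Proof. apply (proj2_sig (constructive_indefinite_description _ (dec_ex f))). Qed.
Lemma Pm_N f : Nm (Pm f). Proof. apply (proj2_sig (constructive_indefinite_description _ (dec_ex f))). Qed.
Lemma dec_eq f : adj_dom D T f -> D (Pd f) /\ f = vadd (Pd f) (vadd (Pp f) (Pm f)).
Proof. apply (proj2_sig (constructive_indefinite_description _ (dec_ex f))). Qed.

Definition Sst u a b := vadd (T u) (vadd (vscal Ci a) (vscal (Copp Ci) b)).

Lemma adj_dec u a b : D u -> Ni a -> Nm b -> adj_graph D T (vadd u (vadd a b)) (Sst u a b).
Proof. intros. apply adj_add. apply adj_D; auto. apply adj_add; auto. Qed.

Lemma adj_dom_dec u a b : D u -> Ni a -> Nm b -> adj_dom D T (vadd u (vadd a b)).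
Proof. intros. eexists. apply adj_dec; auto. Qed.

Lemma dec_char f u a b : D u -> Ni a -> Nm b -> f = vadd u (vadd a b) ->
  Pd f = u /\ Pp f = a /\ Pm f = b.
Proof.
  intros Du Na Nb E.
  assert (Af : adj_dom D T f) by (rewrite E; apply adj_dom_dec; auto).
  destruct (dec_eq f Af) as [Dd Ef].
  destruct (vN_unique D T Hdense Hsym (vsub (Pd f) u) (vsub (Pp f) a) (vsub (Pm f) b)) as [E1 [E2 E3]].
  apply (Dsub D T Hop); auto. apply sub_sub; auto. apply defect_subspace. apply Pp_N.
  apply sub_sub; auto. apply defect_subspace. apply Pm_N.
  assert (Q : vadd (Pd f) (vadd (Pp f) (Pm f)) = vadd u (vadd a b)) by (rewrite <- Ef; exact E).
  apply veq. intro z. assert (H0 : inner (vadd (Pd f) (vadd (Pp f) (Pm f))) z = inner (vadd u (vadd a b)) z) by (rewrite Q; reflexivity).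
  vnorm. apply (f_equal Re) in H0 as R1. apply (f_equal Im) in H0 as I1.
  simpl in R1, I1. Cext; lra.
  assert (forall x y : H, vsub x y = vzero -> x = y).
  { intros x y Exy. apply veq. intro z. assert (inner (vsub x y) z = C0) by (rewrite Exy; apply inner_0l).
    vnorm. apply (f_equal Re) in H0 as R1. apply (f_equal Im) in H0 as I1. simpl in R1, I1. Cext; lra. }
  auto.
Qed.

Lemma adj_S f f' : adj_graph D T f f' -> f' = Sst (Pd f) (Pp f) (Pm f).
Proof.
  intro A. assert (Af : adj_dom D T f) by (exists f'; auto).
  destruct (dec_eq f Af) as [Dd Ef].
  apply (adj_unique D T Hdense f); auto. rewrite Ef at 1. apply adj_dec; auto. apply Pp_N. apply Pm_N.
Qed.

Lemma adj_dom_add f g : adj_dom D T f -> adj_dom D T g -> adj_dom D T (vadd f g).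
Proof. intros [h Hf] [k Hg]. exists (vadd h k). apply adj_add; auto. Qed.
Lemma adj_dom_scal c f : adj_dom D T f -> adj_dom D T (vscal c f).
Proof. intros [h Hf]. exists (vscal c h). apply adj_scal; auto. Qed.

Lemma dec_add f g : adj_dom D T f -> adj_dom D T g ->
  Pd (vadd f g) = vadd (Pd f) (Pd g) /\ Pp (vadd f g) = vadd (Pp f) (Pp g) /\ Pm (vadd f g) = vadd (Pm f) (Pm g).
Proof.
  intros Af Ag. destruct (dec_eq f Af) as [Df Ef]. destruct (dec_eq g Ag) as [Dg Eg].
  apply dec_char. apply Hop; auto. apply defect_subspace; apply Pp_N. apply defect_subspace; apply Pm_N.
  rewrite Ef at 1. rewrite Eg at 1. apply veq; intro z; vnorm; Cext.
Qed.

Lemma dec_scal c f : adj_dom D T f ->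
  Pd (vscal c f) = vscal c (Pd f) /\ Pp (vscal c f) = vscal c (Pp f) /\ Pm (vscal c f) = vscal c (Pm f).
Proof.
  intros Af. destruct (dec_eq f Af) as [Df Ef].
  apply dec_char. apply Hop; auto. apply defect_subspace; apply Pp_N. apply defect_subspace; apply Pm_N.
  rewrite Ef at 1. apply veq; intro z; vnorm; Cext.
Qed.

End Dec.

Definition scl {H : PreHilbert} (c : C) (l : list (C * H)) := map (fun p => (Cmul c (fst p), snd p)) l.
Definition Lm {H : PreHilbert} (F : H -> H) (l : list (C * H)) := map (fun p => (fst p, F (snd p))) l.
Definition Blist {H : PreHilbert} (B : H -> Prop) (l : list (C * H)) := forall p, In p l -> B (snd p).

Lemma lincomb_app {H : PreHilbert} (l l' : list (C * H)) : lincomb (l ++ l') = vadd (lincomb l) (lincomb l').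
Proof.
  induction l as [|p l IH]; simpl. rewrite vadd_0l; auto.
  rewrite IH. apply veq; intro z; vnorm; Cext.
Qed.

Lemma lincomb_scl {H : PreHilbert} c (l : list (C * H)) : lincomb (scl c l) = vscal c (lincomb l).
Proof.
  induction l as [|p l IH]; simpl. rewrite vscal_zero; auto.
  rewrite IH. apply veq; intro z; vnorm; Cext.
Qed.

Lemma Lm_app {H : PreHilbert} F (l l' : list (C * H)) : Lm F (l ++ l') = Lm F l ++ Lm F l'.
Proof. apply map_app. Qed.
Lemma Lm_scl {H : PreHilbert} F c (l : list (C * H)) : Lm F (scl c l) = scl c (Lm F l).
Proof. unfold Lm, scl. rewrite !map_map. reflexivity. Qed.

Lemma Blist_app {H : PreHilbert} (B : H -> Prop) l l' : Blist B l -> Blist B l' -> Blist B (l ++ l').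
Proof. intros A A' p Hp. apply in_app_or in Hp. destruct Hp; auto. Qed.
Lemma Blist_scl {H : PreHilbert} (B : H -> Prop) c l : Blist B l -> Blist B (scl c l).
Proof. intros A p Hp. unfold scl in Hp. apply in_map_iff in Hp. destruct Hp as [q [<- Hq]]. simpl. apply (A q Hq). Qed.
Lemma Blist_Lm {H : PreHilbert} (B B' : H -> Prop) F l : (forall b, B b -> B' (F b)) -> Blist B l -> Blist B' (Lm F l).
Proof. intros HF A p Hp. unfold Lm in Hp. apply in_map_iff in Hp. destruct Hp as [q [<- Hq]]. simpl. apply HF, A; auto. Qed.

Lemma lincomb_in {H : PreHilbert} (M : H -> Prop) l : subspace M -> Blist M l -> M (lincomb l).
Proof.
  intros SM. induction l as [|p l IH]; intro A; simpl. apply SM.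
  apply SM. apply SM. apply A; simpl; auto. apply IH. intros q Hq; apply A; simpl; auto.
Qed.

Lemma lincomb_sub {H : PreHilbert} (l l' : list (C * H)) :
  vsub (lincomb l) (lincomb l') = lincomb (l ++ scl (Copp C1) l').
Proof. rewrite lincomb_app, lincomb_scl. unfold vsub. rewrite vopp_scal. reflexivity. Qed.

Lemma hnorm_cont {H : PreHilbert} (a b : H) : Rabs (hnorm a - hnorm b) <= hnorm (vsub a b).
Proof.
  assert (E1 : hnorm a <= hnorm (vsub a b) + hnorm b).
  { replace a with (vadd (vsub a b) b) at 1 by (apply veq; intro z; vnorm; Cext). apply hnorm_tri. }
  assert (E2 : hnorm b <= hnorm (vsub b a) + hnorm a).
  { replace b with (vadd (vsub b a) a) at 1 by (apply veq; intro z; vnorm; Cext). apply hnorm_tri. }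
  rewrite vsub_sym in E2. apply Rabs_le. lra.
Qed.

Section Iso.
Context {H : HilbertSpace} (B1 B2 M1 M2 : H -> Prop) (F : H -> H).
Context (FB : forall b, B1 b -> B2 (F b))
        (Finner : forall b b', B1 b -> B1 b' -> inner (F b) (F b') = inner b b')
        (onb1 : is_onb M1 B1) (SM1 : subspace M1) (SM2 : subspace M2) (CM2 : closed_set M2)
        (B2M : forall b, B2 b -> M2 b).

Lemma lin_inner1 b l : B1 b -> Blist B1 l -> inner (F b) (lincomb (Lm F l)) = inner b (lincomb l).
Proof.
  intros Bb. induction l as [|p l IH]; intro A; simpl. rewrite !inner_0r; auto.
  assert (Bp : B1 (snd p)) by (apply A; simpl; auto).
  assert (Bl : Blist B1 l) by (intros q Hq; apply A; simpl; auto).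
  rewrite !inner_add_r, !inner_scal_r, (Finner b (snd p) Bb Bp), (IH Bl). reflexivity.
Qed.

Lemma lin_inner l l' : Blist B1 l -> Blist B1 l' ->
  inner (lincomb (Lm F l)) (lincomb (Lm F l')) = inner (lincomb l) (lincomb l').
Proof.
  induction l as [|p l IH]; intros A A'; simpl. rewrite !inner_0l; auto.
  assert (Bp : B1 (snd p)) by (apply A; simpl; auto).
  assert (Bl : Blist B1 l) by (intros q Hq; apply A; simpl; auto).
  rewrite !inner_add_l, !inner_scal_l, (lin_inner1 _ _ Bp A'), (IH Bl A'). reflexivity.
Qed.

Lemma lin_dist l l' : Blist B1 l -> Blist B1 l' ->
  hnorm (vsub (lincomb (Lm F l)) (lincomb (Lm F l'))) = hnorm (vsub (lincomb l) (lincomb l')).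
Proof.
  intros A A'. rewrite !lincomb_sub, <- Lm_scl, <- Lm_app. unfold hnorm. rewrite lin_inner; auto.
  apply Blist_app; auto. apply Blist_scl; auto. apply Blist_app; auto. apply Blist_scl; auto.
Qed.

Definition Kprop (x y : H) := M2 y /\ forall l, Blist B1 l -> hnorm (vsub y (lincomb (Lm F l))) = hnorm (vsub x (lincomb l)).

Lemma approx x e : M1 x -> 0 < e -> exists l, Blist B1 l /\ hnorm (vsub x (lincomb l)) < e.
Proof.
  intros Mx He. destruct onb1 as [_ [_ [_ D1]]]. destruct (D1 x Mx e He) as [l [A Hl]]. exists l; auto.
Qed.

Lemma K_exists x : M1 x -> exists y, Kprop x y.
Proof.
  intro Mx.
  assert (Hch : forall n : nat, {l | Blist B1 l /\ hnorm (vsub x (lincomb l)) < / (INR n + 1)}).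
  { intro n. apply constructive_indefinite_description. apply approx; auto. apply inv_pos. }
  set (ls := fun n => proj1_sig (Hch n)).
  assert (Bls : forall n, Blist B1 (ls n)) by (intro n; apply (proj2_sig (Hch n))).
  assert (Hls : forall n, hnorm (vsub x (lincomb (ls n))) < / (INR n + 1)) by (intro n; apply (proj2_sig (Hch n))).
  set (ys := fun n => lincomb (Lm F (ls n))).
  assert (Cy : cauchy ys).
  { intros e He. destruct (small_inv (e/2)) as [N HN]. lra. exists N. intros n k Hn Hk.
    unfold ys. rewrite lin_dist; auto.
    pose proof (vsub_tri (lincomb (ls n)) x (lincomb (ls k))). rewrite (vsub_sym _ x) in H0.
    pose proof (Hls n). pose proof (Hls k). pose proof (HN n Hn). pose proof (HN k Hk). lra. }
  destruct (complete H ys Cy) as [y Cy'].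
  exists y. split.
  - apply (CM2 ys); auto. intro n. apply lincomb_in; auto. eapply Blist_Lm; [|apply Bls]. intros b Bb. apply B2M, FB; auto.
  - intros l Bl. apply Rle_antisym.
    + assert (hnorm (vsub y (lincomb (Lm F l))) - hnorm (vsub x (lincomb l)) <= 0); [|lra].
      apply real_approx. intros e He.
      destruct (Cy' (e/2)) as [N1 HN1]. lra. destruct (small_inv (e/2)) as [N2 HN2]. lra.
      set (n := max N1 N2). pose proof (HN1 n ltac:(lia)). pose proof (HN2 n ltac:(lia)). pose proof (Hls n).
      pose proof (vsub_tri y (ys n) (lincomb (Lm F l))). unfold ys in H3 at 2. rewrite lin_dist in H3; auto.
      pose proof (vsub_tri (lincomb (ls n)) x (lincomb l)). rewrite (vsub_sym _ x) in H4.
      rewrite (vsub_sym y (ys n)) in H3. lra.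
    + assert (hnorm (vsub x (lincomb l)) - hnorm (vsub y (lincomb (Lm F l))) <= 0); [|lra].
      apply real_approx. intros e He.
      destruct (Cy' (e/2)) as [N1 HN1]. lra. destruct (small_inv (e/2)) as [N2 HN2]. lra.
      set (n := max N1 N2). pose proof (HN1 n ltac:(lia)). pose proof (HN2 n ltac:(lia)). pose proof (Hls n).
      pose proof (vsub_tri x (lincomb (ls n)) (lincomb l)). rewrite <- (lin_dist (ls n) l) in H3 by auto.
      pose proof (vsub_tri (lincomb (Lm F (ls n))) y (lincomb (Lm F l))). fold (ys n) in H4.
      fold (ys n) in H3. lra.
Qed.

Lemma K_unique x y y' : M1 x -> Kprop x y -> Kprop x y' -> y = y'.
Proof.
  intros Mx [_ K] [_ K']. apply veq. intro z.
  assert (vsub y y' = vzero); [|apply C_approx; intros e He].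
  { apply hnorm_zero. apply Rle_antisym; [|apply hnorm_pos]. apply real_approx. intros e He.
    destruct (approx x (e/2) Mx) as [l [Bl Hl]]. lra.
    pose proof (vsub_tri y (lincomb (Lm F l)) y'). rewrite K in H0 by auto.
    rewrite (vsub_sym (lincomb (Lm F l)) y'), K' in H0 by auto. lra. }
  replace y with (vadd (vsub y y') y') by (apply veq; intro w; vnorm; Cext).
  rewrite H0, vadd_0l. unfold Rminus. rewrite !Rplus_opp_r, Rabs_R0. lra.
Qed.

Definition Vmap (x : H) : H :=
  match excluded_middle_informative (M1 x) with
  | left p => proj1_sig (constructive_indefinite_description _ (K_exists x p))
  | right _ => vzero
  end.

Lemma V_K x : M1 x -> Kprop x (Vmap x).
Proof.
  intro Mx. unfold Vmap. destruct (excluded_middle_informative (M1 x)); [|contradiction].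
  apply (proj2_sig (constructive_indefinite_description _ (K_exists x m))).
Qed.

Lemma V_M2 x : M1 x -> M2 (Vmap x). Proof. intro; apply V_K; auto. Qed.

Lemma V_dist x l : M1 x -> Blist B1 l -> hnorm (vsub (Vmap x) (lincomb (Lm F l))) = hnorm (vsub x (lincomb l)).
Proof. intros; apply V_K; auto. Qed.

Lemma vsub0 (y : H) : vsub y vzero = y.
Proof. apply veq; intro z; vnorm; Cext. Qed.

Lemma V_norm x : M1 x -> hnorm (Vmap x) = hnorm x.
Proof.
  intro Mx. pose proof (V_dist x nil Mx ltac:(intros p Hp; destruct Hp)). simpl in H0.
  rewrite !vsub0 in H0. auto.
Qed.

Lemma small_zero (w : H) : (forall e, 0 < e -> hnorm w <= e) -> w = vzero.
Proof.
  intro E. apply hnorm_zero. apply Rle_antisym; [|apply hnorm_pos]. apply real_approx; auto.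
Qed.

Lemma sub0_eq (x y : H) : vsub x y = vzero -> x = y.
Proof.
  intros Exy. apply veq. intro z. assert (Q : inner (vsub x y) z = C0) by (rewrite Exy; apply inner_0l).
  vnorm. apply (f_equal Re) in Q as R1. apply (f_equal Im) in Q as I1. simpl in R1, I1. Cext; lra.
Qed.

Lemma V_add x y : M1 x -> M1 y -> Vmap (vadd x y) = vadd (Vmap x) (Vmap y).
Proof.
  intros Mx My. apply sub0_eq, small_zero. intros e He.
  destruct (approx x (e/4) Mx) as [lx [Bx Hx]]. lra.
  destruct (approx y (e/4) My) as [ly [By Hy]]. lra.
  assert (Mxy : M1 (vadd x y)) by (apply SM1; auto).
  pose proof (vsub_tri (Vmap (vadd x y)) (lincomb (Lm F (lx ++ ly))) (vadd (Vmap x) (Vmap y))).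
  rewrite V_dist in H0 by (auto; apply Blist_app; auto).
  rewrite Lm_app, !lincomb_app in H0.
  replace (vsub (vadd x y) (vadd (lincomb lx) (lincomb ly))) with (vadd (vsub x (lincomb lx)) (vsub y (lincomb ly))) in H0
    by (apply veq; intro z; vnorm; Cext).
  replace (vsub (vadd (lincomb (Lm F lx)) (lincomb (Lm F ly))) (vadd (Vmap x) (Vmap y)))
    with (vadd (vsub (lincomb (Lm F lx)) (Vmap x)) (vsub (lincomb (Lm F ly)) (Vmap y))) in H0
    by (apply veq; intro z; vnorm; Cext).
  pose proof (hnorm_tri (vsub x (lincomb lx)) (vsub y (lincomb ly))).
  pose proof (hnorm_tri (vsub (lincomb (Lm F lx)) (Vmap x)) (vsub (lincomb (Lm F ly)) (Vmap y))).
  rewrite (vsub_sym (lincomb (Lm F lx))), (vsub_sym (lincomb (Lm F ly))), !V_dist in H2 by auto.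
  lra.
Qed.

Lemma V_scal c x : M1 x -> Vmap (vscal c x) = vscal c (Vmap x).
Proof.
  intros Mx. apply sub0_eq, small_zero. intros e He.
  set (k := sqrt (Re c * Re c + Im c * Im c)). assert (Hk : 0 <= k) by apply sqrt_pos.
  destruct (approx x (e / (2 * k + 1)) Mx) as [lx [Bx Hx]]. apply Rdiv_lt_0_compat; lra.
  assert (Mcx : M1 (vscal c x)) by (apply SM1; auto).
  pose proof (vsub_tri (Vmap (vscal c x)) (lincomb (Lm F (scl c lx))) (vscal c (Vmap x))).
  rewrite V_dist in H0 by (auto; apply Blist_scl; auto).
  rewrite Lm_scl, !lincomb_scl in H0.
  replace (vsub (vscal c x) (vscal c (lincomb lx))) with (vscal c (vsub x (lincomb lx))) in H0
    by (apply veq; intro z; vnorm; Cext).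
  replace (vsub (vscal c (lincomb (Lm F lx))) (vscal c (Vmap x))) with (vscal c (vsub (lincomb (Lm F lx)) (Vmap x))) in H0
    by (apply veq; intro z; vnorm; Cext).
  rewrite !hnorm_scal in H0. fold k in H0. rewrite (vsub_sym (lincomb (Lm F lx)) (Vmap x)), V_dist in H0 by auto.
  pose proof (hnorm_pos (vsub x (lincomb lx))).
  apply Rle_trans with (k * hnorm (vsub x (lincomb lx)) + k * hnorm (vsub x (lincomb lx))). lra.
  apply Rle_trans with ((2 * k + 1) * hnorm (vsub x (lincomb lx))). nra.
  replace e with ((2 * k + 1) * (e / (2 * k + 1))) by (field; lra).
  apply Rmult_le_compat_l; lra.
Qed.

Lemma V_inner x y : M1 x -> M1 y -> inner (Vmap x) (Vmap y) = inner x y.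
Proof.
  intros Mx My.
  assert (Pol : forall a b : H, inner a b =
     mkC ((nsq (vadd a b) - nsq a - nsq b) / 2) ((nsq (vadd a (vscal Ci b)) - nsq a - nsq b) / 2)).
  { intros a b. unfold nsq. vnorm. apply Ceq; simpl; rewrite ?inner_self_im, ?(inner_sym_re a b), ?(inner_sym_im a b); field. }
  assert (NV : forall z, M1 z -> nsq (Vmap z) = nsq z).
  { intros z Mz. rewrite <- !hnorm_sq, V_norm; auto. }
  assert (Miy : M1 (vscal Ci y)) by (apply SM1; auto).
  rewrite !Pol. rewrite <- V_add, <- V_scal, <- V_add, !NV; auto. apply SM1; auto. apply SM1; auto.
Qed.

End Iso.

Lemma sig_ext' {A : Type} (P : A -> Prop) (a b : {x | P x}) : proj1_sig a = proj1_sig b -> a = b.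
Proof. destruct a as [a Ha], b as [b Hb]. simpl. intros ->. f_equal. apply proof_irrelevance. Qed.

Section Uni.
Context {H : HilbertSpace}.

Definition extF (B1 B2 : H -> Prop) (f : {x | B1 x} -> {y | B2 y}) (x : H) : H :=
  match excluded_middle_informative (B1 x) with
  | left p => proj1_sig (f (exist _ x p))
  | right _ => vzero
  end.

Lemma extF_val B1 B2 f x (p : B1 x) : extF B1 B2 f x = proj1_sig (f (exist _ x p)).
Proof.
  unfold extF. destruct (excluded_middle_informative (B1 x)); [|contradiction].
  do 3 f_equal. apply proof_irrelevance.
Qed.

Lemma extF_B B1 B2 f x : B1 x -> B2 (extF B1 B2 f x).
Proof. intro p. rewrite (extF_val _ _ _ _ p). apply proj2_sig. Qed.

Lemma extF_inv B1 B2 (f : {x | B1 x} -> {y | B2 y}) g (gf : forall x, g (f x) = x) x :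
  B1 x -> extF B2 B1 g (extF B1 B2 f x) = x.
Proof.
  intro p. rewrite (extF_val _ _ _ _ (extF_B B1 B2 f x p)).
  assert (exist _ (extF B1 B2 f x) (extF_B B1 B2 f x p) = f (exist _ x p)).
  { apply sig_ext'. simpl. apply extF_val. }
  rewrite H0, gf. reflexivity.
Qed.

Lemma extF_inner B1 B2 M1 M2 (f : {x | B1 x} -> {y | B2 y}) g (gf : forall x, g (f x) = x) :
  is_onb M1 B1 -> is_onb M2 B2 ->
  forall b b', B1 b -> B1 b' -> inner (extF B1 B2 f b) (extF B1 B2 f b') = inner b b'.
Proof.
  intros O1 O2 b b' Bb Bb'. destruct O1 as [_ [N1 [Or1 _]]]. destruct O2 as [_ [N2 [Or2 _]]].
  destruct (classic (b = b')) as [<-|N]. rewrite (N2 (extF B1 B2 f b)), (N1 b); auto. apply extF_B; auto.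
  rewrite (Or2 (extF B1 B2 f b) (extF B1 B2 f b')), (Or1 b b'); auto. apply extF_B; auto. apply extF_B; auto.
  intro E. apply N. rewrite <- (extF_inv B1 B2 f g gf b Bb), <- (extF_inv B1 B2 f g gf b' Bb'), E. reflexivity.
Qed.

Lemma Lm_Lm (F G : H -> H) (B : H -> Prop) l : (forall b, B b -> G (F b) = b) -> Blist B l -> Lm G (Lm F l) = l.
Proof.
  intros E A. unfold Lm. rewrite map_map. rewrite <- (map_id l) at 2. apply map_ext_in.
  intros [c x] Hp. simpl. rewrite E; auto. apply (A (c, x) Hp).
Qed.

Lemma unitary (M1 M2 : H -> Prop) : subspace M1 -> closed_set M1 -> subspace M2 -> closed_set M2 ->
  same_dim M1 M2 ->
  exists V : H -> H, (forall x, M2 x -> M1 (V x)) /\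
    (forall x y, M2 x -> M2 y -> V (vadd x y) = vadd (V x) (V y)) /\
    (forall c x, M2 x -> V (vscal c x) = vscal c (V x)) /\
    (forall x y, M2 x -> M2 y -> inner (V x) (V y) = inner x y) /\
    (forall y, M1 y -> exists x, M2 x /\ V x = y).
Proof.
  intros SM1 CM1 SM2 CM2 [B1 [B2 [O1 [O2 [f [g [gf fg]]]]]]].
  set (Fg := extF B2 B1 g). set (Ff := extF B1 B2 f).
  assert (FgB : forall b, B2 b -> B1 (Fg b)) by (intros; apply extF_B; auto).
  assert (FfB : forall b, B1 b -> B2 (Ff b)) by (intros; apply extF_B; auto).
  assert (Fgi : forall b b', B2 b -> B2 b' -> inner (Fg b) (Fg b') = inner b b')
    by (apply (extF_inner B2 B1 M2 M1 g f fg O2 O1)).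
  assert (Ffi : forall b b', B1 b -> B1 b' -> inner (Ff b) (Ff b') = inner b b')
    by (apply (extF_inner B1 B2 M1 M2 f g gf O1 O2)).
  assert (B1M : forall b, B1 b -> M1 b) by apply O1.
  assert (B2M : forall b, B2 b -> M2 b) by apply O2.
  set (V := Vmap B2 B1 M2 M1 Fg FgB Fgi O2 SM1 CM1 B1M).
  set (W := Vmap B1 B2 M1 M2 Ff FfB Ffi O1 SM2 CM2 B2M).
  exists V. split; [|split; [|split; [|split]]].
  - intros x Mx. apply V_M2; auto.
  - intros x y Mx My. apply V_add; auto.
  - intros c x Mx. apply V_scal; auto.
  - intros x y Mx My. apply V_inner; auto.
  - intros y My. exists (W y). split. apply V_M2; auto.
    apply sub0_eq, small_zero. intros e He.
    destruct (approx B1 M1 O1 y (e/2) My) as [l [Bl Hl]]. lra.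
    assert (Bm : Blist B2 (Lm Ff l)) by (apply (Blist_Lm B1); auto).
    pose proof (V_dist B2 B1 M2 M1 Fg FgB Fgi O2 SM1 CM1 B1M (W y) (Lm Ff l) ltac:(apply V_M2; auto) Bm) as E1.
    pose proof (V_dist B1 B2 M1 M2 Ff FfB Ffi O1 SM2 CM2 B2M y l My Bl) as E2.
    fold V in E1. fold W in E2. rewrite E2 in E1.
    rewrite (Lm_Lm Ff Fg B1) in E1 by (auto; intros; apply extF_inv; auto).
    pose proof (vsub_tri (V (W y)) (lincomb l) y). rewrite (vsub_sym (lincomb l) y) in H0. lra.
Qed.

End Uni.

Section Fwd.
Context {H : PreHilbert} (D : H -> Prop) (T : H -> H).
Context (Hop : is_operator D T) (Hdense : dense D) (Hsym : symmetric_op D T).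

Definition SE := forall mu, Cplus mu -> forall f,
  (exists u v, D u /\ defect D T mu v /\ f = vadd u v) <-> (exists u v, D u /\ defect D T Ci v /\ f = vadd u v).

Lemma orth_neq (SEh : SE) l f g : Cplus l -> l <> Ci -> defect D T l f -> defect D T (Copp Ci) g ->
  inner f g = C0.
Proof.
  intros Pl Nl Df Dg.
  destruct (proj1 (SEh l Pl f) (ex_intro _ vzero (ex_intro _ f (conj (proj1 (proj1 Hop)) (conj Df (eq_sym (vadd_0l f))))))) as [u [v [Du [Nv Ef]]]].
  assert (A : adj_graph D T f (vadd (T u) (vscal Ci v))).
  { rewrite Ef. apply adj_add. apply adj_D; auto. auto. }
  pose proof (adj_unique D T Hdense _ _ _ Df A) as Es.
  assert (Q : Cadd (inner f g) (inner (vscal l f) (vscal (Copp Ci) g)) = C0).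
  { rewrite Es. rewrite Ef at 1. vnorm. rewrite (Dg u Du). vnorm. Cext. }
  vnorm. apply (f_equal Re) in Q as R1. apply (f_equal Im) in Q as I1. simpl in R1, I1.
  set (zr := Re (inner f g)) in *. set (zi := Im (inner f g)) in *.
  assert (R1' : (1 - Im l) * zr - Re l * zi = 0) by lra.
  assert (I1' : (1 - Im l) * zi + Re l * zr = 0) by lra.
  assert (E1 : (1 - Im l) * (zr * zr + zi * zi) = 0).
  { replace ((1 - Im l) * (zr * zr + zi * zi)) with (zr * ((1 - Im l) * zr - Re l * zi) + zi * ((1 - Im l) * zi + Re l * zr)) by ring.
    rewrite R1', I1'. ring. }
  assert (E2 : Re l * (zr * zr + zi * zi) = 0).
  { replace (Re l * (zr * zr + zi * zi)) with (zr * ((1 - Im l) * zi + Re l * zr) - zi * ((1 - Im l) * zr - Re l * zi)) by ring.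
    rewrite R1', I1'. ring. }
  destruct (Req_dec (zr * zr + zi * zi) 0) as [Z|Z].
  - assert (Hr : zr * zr = 0) by (pose proof (Rle_0_sqr zr); pose proof (Rle_0_sqr zi); unfold Rsqr in *; lra).
    assert (Hi : zi * zi = 0) by (pose proof (Rle_0_sqr zr); pose proof (Rle_0_sqr zi); unfold Rsqr in *; lra).
    apply Rmult_integral in Hr. apply Rmult_integral in Hi.
    apply Ceq; simpl; [destruct Hr | destruct Hi]; auto.
  - exfalso. apply Nl. apply Ceq; simpl.
    apply Rmult_integral in E2. destruct E2; [auto|contradiction].
    apply Rmult_integral in E1. destruct E1; [lra|contradiction].
Qed.

Lemma fwd (SEh : SE) : forall l, Cplus l -> forall f g,
  defect D T l f -> defect D T (Copp Ci) g -> inner f g = C0.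
Proof.
  intros l Pl f g Df Dg.
  destruct (classic (l = Ci)) as [->|Nl]; [|eapply orth_neq; eauto].
  apply C_approx. intros e He.
  set (c := hnorm f * hnorm g + 1).
  assert (Hc : 0 < c) by (unfold c; pose proof (hnorm_pos f); pose proof (hnorm_pos g); nra).
  set (t := e / c). assert (Ht : 0 < t) by (apply Rdiv_lt_0_compat; auto).
  set (mu := mkC 0 (1 + t)).
  assert (Pmu : Cplus mu) by (unfold Cplus, mu; simpl; lra).
  destruct (proj2 (SEh mu Pmu f) (ex_intro _ vzero (ex_intro _ f (conj (proj1 (proj1 Hop)) (conj Df (eq_sym (vadd_0l f))))))) as [u [w [Du [Nw Ef]]]].
  assert (Ow : inner w g = C0).
  { apply (orth_neq SEh mu); auto. intro E. apply (f_equal Im) in E. unfold mu in E. simpl in E. lra. }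
  assert (A : adj_graph D T f (vadd (T u) (vscal mu w))).
  { rewrite Ef. apply adj_add. apply adj_D; auto. auto. }
  pose proof (adj_unique D T Hdense _ _ _ Df A) as Es.
  assert (Eu : vsub (T u) (vscal mu u) = vscal (mkC 0 (- t)) f).
  { assert (Ew : w = vsub f u) by (rewrite Ef; apply veq; intro z; vnorm; Cext).
    rewrite Ew in Es. apply veq; intro z.
    assert (Q : inner (vscal Ci f) z = inner (vadd (T u) (vscal mu (vsub f u))) z) by (rewrite Es; auto).
    unfold mu in *. vnorm. apply (f_equal Re) in Q as R1. apply (f_equal Im) in Q as I1. simpl in R1, I1.
    Cext; lra. }
  pose proof (lower_bound D T Hsym mu u Du) as LB. rewrite Eu in LB.
  replace (mkC 0 (- t)) with (Cmul (Cr t) (Copp Ci)) in LB by Cext.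
  rewrite <- vscal_assoc, hnorm_scal_r, hnorm_scal in LB. simpl in LB.
  replace (- 0 * - 0 + - (1) * - (1)) with 1 in LB by ring. rewrite sqrt_1 in LB.
  unfold mu in LB; simpl in LB. rewrite Rabs_right in LB by lra. rewrite Rabs_right in LB by lra.
  assert (Hu : hnorm u <= t * hnorm f).
  { pose proof (hnorm_pos u). nra. }
  assert (Efg : inner f g = inner u g) by (rewrite Ef at 1; rewrite inner_add_l, Ow; Cext).
  rewrite Efg. simpl. unfold Rminus. rewrite Ropp_0, !Rplus_0_r.
  assert (B : t * hnorm f * hnorm g <= e).
  { replace e with (t * c) by (unfold t; field; lra). unfold c.
    pose proof (hnorm_pos f); pose proof (hnorm_pos g). nra. }
  split.
  - eapply Rle_trans. apply re_small. exact Hu. lra.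
  - eapply Rle_trans. apply im_small. exact Hu. lra.
Qed.

End Fwd.

Section Bwd.
Context {H : HilbertSpace} (D : H -> Prop) (T : H -> H).
Context (Hop : is_operator D T) (Hdense : dense D) (Hcl : closed_op D T) (Hsym : symmetric_op D T).
Context (Horth : forall l, Cplus l -> forall f g, defect D T l f -> defect D T (Copp Ci) g -> inner f g = C0).

Notation Ni := (defect D T Ci).
Notation Nm := (defect D T (Copp Ci)).
Notation PD := (Pd D T Hop Hcl Hsym).
Notation PP := (Pp D T Hop Hcl Hsym).
Notation PM := (Pm D T Hop Hcl Hsym).

Lemma imS u mu h : D u -> defect D T mu h ->
  Im (inner (vadd (T u) (vscal mu h)) (vadd u h)) = Im mu * nsq h.
Proof.
  intros Du Nh. vnorm. rewrite (Nh u Du). vnorm. simpl.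
  rewrite (T_real D T Hsym u Du), (inner_self_im h). unfold nsq.
  rewrite (inner_sym_re u h), (inner_sym_im u h). ring.
Qed.

Lemma defect_dom l v : defect D T l v -> adj_dom D T v.
Proof. intro N. exists (vscal l v). auto. Qed.

Lemma PmZ l v : Cplus l -> defect D T l v -> PM v = vzero.
Proof.
  intros Pl Nv. destruct (dec_eq D T Hop Hcl Hsym v (defect_dom l v Nv)) as [Du Ev].
  set (u := PD v) in *. set (a := PP v) in *. set (b := PM v) in *.
  assert (Na : Ni a) by apply Pp_N. assert (Nb : Nm b) by apply Pm_N.
  pose proof (adj_S D T Hop Hdense Hcl Hsym v _ Nv) as Es. fold u a b in Es. unfold Sst in Es.
  assert (O : inner v b = C0) by (apply (Horth l); auto).
  apply nsq0.
  assert (Q : Cadd (inner v b) (inner (vscal l v) (vscal (Copp Ci) b)) = C0).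
  { rewrite inner_scal_l, inner_scal_r, O. Cext. }
  rewrite Es in Q. rewrite Ev in Q at 1. vnorm. rewrite (Nb u Du) in Q. vnorm.
  apply (f_equal Re) in Q. simpl in Q. lra.
Qed.

Lemma Ni_dec l v : Cplus l -> defect D T l v -> D (PD v) /\ v = vadd (PD v) (PP v).
Proof.
  intros Pl Nv. destruct (dec_eq D T Hop Hcl Hsym v (defect_dom l v Nv)) as [Du Ev].
  rewrite (PmZ l v Pl Nv), vadd_0 in Ev. auto.
Qed.

Lemma Pp_iso l v : Cplus l -> defect D T l v -> nsq (PP v) = Im l * nsq v.
Proof.
  intros Pl Nv. destruct (Ni_dec l v Pl Nv) as [Du Ev].
  pose proof (adj_S D T Hop Hdense Hcl Hsym v _ Nv) as Es. unfold Sst in Es.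
  rewrite (PmZ l v Pl Nv), vscal_zero, vadd_0 in Es.
  pose proof (imS (PD v) Ci (PP v) Du (Pp_N D T Hop Hcl Hsym v)) as I.
  rewrite <- Es, <- Ev in I. rewrite inner_scal_l in I. simpl in I. rewrite inner_self_im in I.
  unfold nsq in *. simpl in I. lra.
Qed.

Lemma Pp_linear_l l v w : Cplus l -> defect D T l v -> defect D T l w ->
  PP (vsub v w) = vsub (PP v) (PP w).
Proof.
  intros Pl Nv Nw. unfold vsub. rewrite !vopp_scal.
  rewrite (proj1 (proj2 (dec_add D T Hop Hdense Hcl Hsym _ _ (defect_dom l v Nv) (adj_dom_scal D T _ _ (defect_dom l w Nw))))).
  rewrite (proj1 (proj2 (dec_scal D T Hop Hdense Hcl Hsym _ _ (defect_dom l w Nw)))). reflexivity.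
Qed.

Definition Rset l := fun a => exists v, defect D T l v /\ a = PP v.

Lemma Rset_sub l : Cplus l -> subspace (Rset l).
Proof.
  intros Pl. split; [|split].
  - exists vzero. split. apply defect_subspace.
    symmetry. apply (dec_char D T Hop Hdense Hcl Hsym vzero vzero vzero vzero). apply Hop.
    apply defect_subspace. apply defect_subspace. rewrite !vadd_0; auto.
  - intros x y [v [Nv ->]] [w [Nw ->]]. exists (vadd v w). split. apply defect_subspace; auto.
    symmetry. apply (dec_add D T Hop Hdense Hcl Hsym _ _ (defect_dom l v Nv) (defect_dom l w Nw)).
  - intros c x [v [Nv ->]]. exists (vscal c v). split. apply defect_subspace; auto.
    symmetry. apply (dec_scal D T Hop Hdense Hcl Hsym _ _ (defect_dom l v Nv)).
Qed.

Lemma Rset_closed l : Cplus l -> closed_set (Rset l).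
Proof.
  intros Pl as_ a Ha Ca.
  assert (Hch : forall n, {v | defect D T l v /\ as_ n = PP v}).
  { intro n. apply constructive_indefinite_description. apply Ha. }
  set (vs := fun n => proj1_sig (Hch n)).
  assert (Nvs : forall n, defect D T l (vs n)) by (intro n; apply (proj2_sig (Hch n))).
  assert (Evs : forall n, as_ n = PP (vs n)) by (intro n; apply (proj2_sig (Hch n))).
  assert (Il : 0 < Im l) by exact Pl.
  set (c := 1 + / Im l). set (c' := Im l + 1).
  assert (Hc : 0 < c) by (unfold c; pose proof (Rinv_0_lt_compat _ Il); lra).
  assert (B1 : forall v, defect D T l v -> hnorm v <= c * hnorm (PP v)).
  { intros v Nv. apply hnorm_le_sq. pose proof (hnorm_pos (PP v)); nra.
    pose proof (Pp_iso l v Pl Nv). rewrite <- hnorm_sq in H0.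
    set (p := hnorm (PP v)) in *. assert (nsq v = p * p * / Im l).
    { rewrite H0. field. lra. }
    rewrite H1. unfold c. pose proof (Rinv_0_lt_compat _ Il). pose proof (Rle_0_sqr p). unfold Rsqr in *.
    set (q := / Im l) in *. nra. }
  assert (B2 : forall v, defect D T l v -> hnorm (PP v) <= c' * hnorm v).
  { intros v Nv. apply hnorm_le_sq. pose proof (hnorm_pos v); unfold c'; nra.
    rewrite (Pp_iso l v Pl Nv), <- hnorm_sq. unfold c'. pose proof (hnorm_pos v). nra. }
  assert (Cv : cauchy vs).
  { intros e He. destruct (conv_cauchy as_ a Ca (e / c)) as [N HN]. apply Rdiv_lt_0_compat; lra.
    exists N. intros n m Hn Hm. specialize (HN n m Hn Hm). rewrite !Evs in HN.
    rewrite <- (Pp_linear_l l) in HN by auto.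
    eapply Rle_lt_trans. apply B1. apply sub_sub; auto. apply defect_subspace.
    replace e with (c * (e / c)) by (field; lra). apply Rmult_lt_compat_l; auto. }
  destruct (complete H vs Cv) as [v Cv'].
  assert (Nv : defect D T l v) by (apply (defect_closed D T l vs v); auto).
  exists v. split; auto.
  apply (conv_unique as_); auto.
  intros e He. destruct (Cv' (e / c')) as [N HN]. apply Rdiv_lt_0_compat; unfold c'; lra.
  exists N. intros n Hn. rewrite Evs. rewrite <- (Pp_linear_l l) by auto.
  eapply Rle_lt_trans. apply B2. apply sub_sub; auto. apply defect_subspace.
  replace e with (c' * (e / c')) by (unfold c'; field; lra). apply Rmult_lt_compat_l. unfold c'; lra. auto.
Qed.

Lemma R_perp_zero l k : Cplus l -> Ni k -> (forall v, defect D T l v -> inner (PP v) k = C0) -> k = vzero.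
Proof.
  intros Pl Nk Ok. assert (Il : 0 < Im l) by exact Pl.
  assert (Sa : forall v, defect D T l v -> inner v k = C0).
  { intros v Nv. destruct (Ni_dec l v Pl Nv) as [Du Ev].
    pose proof (adj_S D T Hop Hdense Hcl Hsym v _ Nv) as Es. unfold Sst in Es.
    rewrite (PmZ l v Pl Nv), vscal_zero, vadd_0 in Es.
    assert (Oa : inner (PP v) k = C0) by (apply Ok; auto).
    set (u := PD v) in *. set (a := PP v) in *.
    assert (Q : Csub (inner (vscal l v) k) (inner v (vscal Ci k)) = C0).
    { rewrite Es. rewrite Ev. unfold Csub. vnorm. rewrite (Nk _ Du), Oa. vnorm. Cext. }
    unfold Csub in Q. vnorm. apply (f_equal Re) in Q as R1. apply (f_equal Im) in Q as I1. simpl in R1, I1.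
    set (zr := Re (inner v k)) in *. set (zi := Im (inner v k)) in *.
    assert (R1' : Re l * zr - (Im l + 1) * zi = 0) by lra.
    assert (I1' : Re l * zi + (Im l + 1) * zr = 0) by lra.
    assert (E : (Im l + 1) * (zr * zr + zi * zi) = 0).
    { replace ((Im l + 1) * (zr * zr + zi * zi)) with (zr * (Re l * zi + (Im l + 1) * zr) - zi * (Re l * zr - (Im l + 1) * zi)) by ring.
      rewrite R1', I1'. ring. }
    apply Rmult_integral in E. destruct E as [E|E]; [lra|].
    assert (Hr : zr * zr = 0) by (pose proof (Rle_0_sqr zr); pose proof (Rle_0_sqr zi); unfold Rsqr in *; lra).
    assert (Hi : zi * zi = 0) by (pose proof (Rle_0_sqr zr); pose proof (Rle_0_sqr zi); unfold Rsqr in *; lra).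
    apply Rmult_integral in Hr. apply Rmult_integral in Hi.
    apply Ceq; simpl; [destruct Hr | destruct Hi]; auto. }
  set (mu := Cconj l).
  assert (Cmu : Cconj mu = l) by (unfold mu; Cext).
  destruct (projection _ (range_subspace D T Hop mu) (range_closed D T mu Hop Hsym Hcl ltac:(unfold mu; simpl; lra)) k)
    as [m [[w [Dw Em]] Om]].
  set (z := vsub k m) in *.
  assert (Nz : defect D T l z).
  { rewrite <- Cmu. apply range_orth. intros u Du.
    specialize (Om _ (ex_intro _ u (conj Du eq_refl))). rewrite (inner_conj _ z), Om. Cext. }
  assert (Z : z = vzero).
  { apply nsq0. assert (E1 : inner z k = C0) by (apply Sa; auto).
    assert (E2 : inner m z = C0).
    { rewrite Em. apply (defect_orth_range D T). rewrite Cmu. auto. auto. }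
    unfold z at 1. vnorm. rewrite (inner_conj _ z k), E1, E2. simpl. ring. }
  assert (Ek : k = vsub (T w) (vscal mu w)).
  { rewrite <- Em. apply sub0_eq. exact Z. }
  set (c := Csub Ci mu).
  set (h := vsub k (vscal c w)).
  assert (Nh : defect D T mu h).
  { assert (A : adj_graph D T h (vsub (vscal Ci k) (vscal c (T w)))).
    { apply adj_sub. apply Nk. apply adj_scal, adj_D; auto. }
    unfold defect. replace (vscal mu h) with (vsub (vscal Ci k) (vscal c (T w))). exact A.
    unfold h, c. rewrite Ek at 1. rewrite Ek at 1. apply veq; intro y; vnorm. unfold Csub. Cext. }
  assert (Dcw : D (vscal c w)) by (apply Hop; auto).
  pose proof (imS (vscal c w) mu h Dcw Nh) as I.
  assert (Ekh : k = vadd (vscal c w) h) by (unfold h; apply veq; intro y; vnorm; Cext).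
  assert (A2 : adj_graph D T k (vadd (T (vscal c w)) (vscal mu h))).
  { rewrite Ekh at 1. apply adj_add. apply adj_D; auto. auto. }
  pose proof (adj_unique D T Hdense _ _ _ Nk A2) as Es.
  rewrite <- Es, <- Ekh in I. rewrite inner_scal_l in I. simpl in I. rewrite inner_self_im in I.
  unfold mu in I. simpl in I. pose proof (nsq_pos h).
  apply nsq0. pose proof (nsq_pos k). unfold nsq in *. nra.
Qed.

Lemma Ni_in l k : Cplus l -> Ni k -> exists v, defect D T l v /\ PP v = k.
Proof.
  intros Pl Nk.
  destruct (projection _ (Rset_sub l Pl) (Rset_closed l Pl) k) as [r [[v [Nv Er]] Or]].
  exists v. split; auto. rewrite <- Er. symmetry. apply sub0_eq.
  apply (R_perp_zero l); auto.
  - apply sub_sub; auto. apply defect_subspace. rewrite Er. apply Pp_N.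
  - intros v' Nv'. specialize (Or _ (ex_intro _ v' (conj Nv' eq_refl))).
    rewrite inner_conj, Or. Cext.
Qed.

Lemma Ni_sub l k : Cplus l -> Ni k -> exists w v, D w /\ defect D T l v /\ k = vadd w v.
Proof.
  intros Pl Nk. destruct (Ni_in l k Pl Nk) as [v [Nv Ev]].
  destruct (Ni_dec l v Pl Nv) as [Du Evd].
  exists (vscal (Copp C1) (PD v)), v. split. apply Hop; auto. split; auto.
  rewrite Evd at 2. rewrite Ev. apply veq; intro y; vnorm; Cext.
Qed.

End Bwd.

Lemma Ni_scal {H : PreHilbert} (D : H -> Prop) T l c x : defect D T l x -> defect D T l (vscal c x).
Proof. apply defect_subspace. Qed.

Theorem mainTheorem4 (H : HilbertSpace) (D : H -> Prop) (T : H -> H)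
  (Hsep : separable H)
  (Hop : is_operator D T) (Hdense : densely_defined D)
  (Hclosed : closed_op D T) (Hsym : symmetric_op D T)
  (Hdef : equal_nonzero_defect D T) :
  is_PSO D T <->
  (forall l, Cplus l -> forall f g,
     defect D T l f -> defect D T (Copp Ci) g -> inner f g = C0).
Proof.
  split.
  - intros [K [Gm [Gp [Theta [BT [CF Cst]]]]]].
    apply (fwd D T Hop Hdense Hsym).
    intros mu Pmu f. assert (Pi : Cplus Ci) by (unfold Cplus; simpl; lra).
    rewrite (proj2 (CF mu Pmu) f), (proj2 (CF Ci Pi) f). rewrite (Cst mu Ci Pmu Pi). tauto.
  - intro Horth.
    destruct Hdef as [SD _].
    destruct (unitary _ _ (defect_subspace D T Ci) (defect_closed D T Ci)
       (defect_subspace D T (Copp Ci)) (defect_closed D T (Copp Ci)) SD) as [V [VM [Vadd [Vscal [Vinner Vsurj]]]]].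
    set (K := SubH _ (defect_subspace D T Ci) (defect_closed D T Ci)).
    set (s := mkC 1 1).
    set (PD := Pd D T Hop Hclosed Hsym). set (PP := Pp D T Hop Hclosed Hsym). set (PM := Pm D T Hop Hclosed Hsym).
    pose (Gp := (fun f => exist (fun x => defect D T Ci x) (vscal s (PP f)) (Ni_scal D T Ci s _ (Pp_N D T Hop Hclosed Hsym f))) : H -> K).
    pose (Gm := (fun f => exist (fun x => defect D T Ci x) (vscal s (V (PM f))) (Ni_scal D T Ci s _ (VM _ (Pm_N D T Hop Hclosed Hsym f)))) : H -> K).
    assert (V0 : V vzero = vzero).
    { rewrite <- (vscal_C0 (@vzero H)). rewrite Vscal. rewrite !vscal_C0. reflexivity. apply defect_subspace. }
    exists K, Gm, Gp, (fun _ _ => vzero). split; [|split].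
    + split; [|split; [|split]].
      * intros f g Af Ag. destruct (dec_add D T Hop Hdense Hclosed Hsym f g Af Ag) as [_ [Ep Em]].
        split; apply sig_ext'; simpl; fold PP PM in Ep, Em |- *.
        -- rewrite Em, Vadd, vscal_distr_v; auto; apply Pm_N.
        -- rewrite Ep, vscal_distr_v; auto.
      * intros c f Af. destruct (dec_scal D T Hop Hdense Hclosed Hsym c f Af) as [_ [Ep Em]].
        split; apply sig_ext'; simpl; fold PP PM in Ep, Em |- *.
        -- rewrite Em, Vscal, !vscal_assoc. f_equal. Cext. apply Pm_N.
        -- rewrite Ep, !vscal_assoc. f_equal. Cext.
      * intros f f' g g' Af Ag. simpl. unfold Sinner. simpl.
        rewrite (adj_S D T Hop Hdense Hclosed Hsym f f' Af), (adj_S D T Hop Hdense Hclosed Hsym g g' Ag).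
        fold PD PP PM.
        destruct (dec_eq D T Hop Hclosed Hsym f (ex_intro _ f' Af)) as [Du Ef].
        destruct (dec_eq D T Hop Hclosed Hsym g (ex_intro _ g' Ag)) as [Du' Eg].
        fold PD PP PM in Du, Ef, Du', Eg.
        pose proof (Pp_N D T Hop Hclosed Hsym f) as Na. pose proof (Pm_N D T Hop Hclosed Hsym f) as Nb.
        pose proof (Pp_N D T Hop Hclosed Hsym g) as Na'. pose proof (Pm_N D T Hop Hclosed Hsym g) as Nb'.
        fold PP PM in Na, Nb, Na', Nb'.
        pose proof (Vinner _ _ Nb Nb') as VI.
        set (u := PD f) in *. set (a := PP f) in *. set (b := PM f) in *.
        set (u' := PD g) in *. set (a' := PP g) in *. set (b' := PM g) in *.
        rewrite Ef, Eg. unfold Sst. vnorm. rewrite VI.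
        rewrite (Hsym u u' Du Du'), (Na' u Du), (Nb' u Du).
        rewrite (inner_conj _ (T u') a), (inner_conj _ (T u') b), (Na u' Du'), (Nb u' Du').
        vnorm. rewrite (inner_conj _ a u'), (inner_conj _ b u').
        unfold s. Cext.
      * intros [aa Naa] [bb Nbb]. destruct (Vsurj aa Naa) as [x [Nx Vx]].
        set (t := mkC (1/2) (-1/2)).
        assert (Ets : Cmul s t = C1) by (unfold s, t; Cext; field).
        exists (vadd vzero (vadd (vscal t bb) (vscal t x))).
        destruct (dec_char D T Hop Hdense Hclosed Hsym _ vzero (vscal t bb) (vscal t x) (proj1 (proj1 Hop))
          (Ni_scal _ _ _ _ _ Nbb) (Ni_scal _ _ _ _ _ Nx) eq_refl) as [_ [Ep Em]].
        fold PP PM in Ep, Em.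
        split. apply adj_dom_dec; auto. exact (proj1 (proj1 Hop)). apply Ni_scal; auto. apply Ni_scal; auto.
        split; apply sig_ext'; simpl.
        -- rewrite Em, Vscal, Vx, vscal_assoc, Ets, vscal_1; auto.
        -- rewrite Ep, vscal_assoc, Ets, vscal_1; auto.
    + intros l Pl. split.
      * split; [|split].
        -- intros x y. symmetry. apply vadd_0.
        -- intros c x. symmetry. apply vscal_zero.
        -- exists 0. intro x. rewrite hnorm_vzero. pose proof (hnorm_pos x). lra.
      * intro f. split.
        -- intros [u [v [Du [Nv ->]]]].
           split. apply adj_dom_add. exists (T u). apply adj_D; auto. apply (defect_dom D T l); auto.
           destruct (Ni_dec D T Hop Hdense Hclosed Hsym Horth l v Pl Nv) as [Dv Ev]. fold PD PP in Dv, Ev.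
           destruct (dec_char D T Hop Hdense Hclosed Hsym (vadd u v) (vadd u (PD v)) (PP v) vzero) as [_ [_ Em]].
           apply Hop; auto. apply Pp_N. apply defect_subspace.
           rewrite Ev at 1. apply veq; intro z; vnorm; Cext.
           apply sig_ext'. simpl. fold PM in Em |- *. rewrite Em, V0, vscal_zero. reflexivity.
        -- intros [Af E]. apply (f_equal (@proj1_sig _ _)) in E. simpl in E.
           assert (EM : PM f = vzero).
           { apply nsq0. unfold nsq in *. rewrite <- Vinner by apply Pm_N.
             assert (E2 : V (PM f) = vzero).
             { assert (E3 : vscal (mkC (1/2) (-1/2)) (vscal s (V (PM f))) = vzero) by (rewrite <- E; apply vscal_zero).
               rewrite vscal_assoc in E3. replace (Cmul (mkC (1/2) (-1/2)) s) with C1 in E3 by (unfold s; Cext; field).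
               rewrite vscal_1 in E3. auto. }
             rewrite E2, inner_0l. reflexivity. }
           destruct (dec_eq D T Hop Hclosed Hsym f Af) as [Du Ef]. fold PD PP PM in Du, Ef.
           rewrite EM, vadd_0 in Ef.
           destruct (Ni_sub D T Hop Hdense Hclosed Hsym Horth l (PP f) Pl (Pp_N D T Hop Hclosed Hsym f)) as [w [v [Dw [Nv Ew]]]].
           exists (vadd (PD f) w), v. split. apply Hop; auto. split; auto.
           rewrite Ef at 1. rewrite Ew. apply veq; intro z; vnorm; Cext.
    + intros; reflexivity.
Qed.
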